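(* Let $n\ge 2$, let $k_1,\dots,k_n$ be positive integers with $\sum_{i=1}^n\frac1{k_i}=1$, $k=\operatorname{lcm}(k_1,\dots,k_n)$, $w_i=k/k_i$, and $P(x_1,\dots,x_{n-1})=\sum_{i=1}^{n-1}x_i^{k_i}+1$. Fix $\epsilon_1,\dots,\epsilon_{n-1}>0$ and let $C_\epsilon=\{|x_1|=\epsilon_1,\dots,|x_{n-1}|=\epsilon_{n-1}\}$. Let $\psi\in\mathbb{C}$ with $\xi=\psi^{-1}$ satisfying $|\xi|\cdot\sup_{C_\epsilon}\big|\frac{P}{k x_1\cdots x_{n-1}}\big|<1$, and set $$\tilde M=\exp\Big(-\frac{1}{(2\pi i)^{n-1}}\oint_{C_\epsilon}\Big[\log\psi+\log\Big(1-\xi\frac{P(x_1,\dots,x_{n-1})}{k x_1\cdots x_{n-1}}\Big)\Big]\frac{dx_1}{x_1}\cdots\frac{dx_{n-1}}{x_{n-1}}\Big),$$ with the principal branch for the second logarithm. Then $$\tilde M=\xi\exp\Big(\sum_{m\ge1}c_m\frac{\xi^m}{mk^m}\Big),\qquad c_m=\begin{cases}\dfrac{m!}{\prod_{i=1}^n (m/k_i)!},& k\mid m,\\[2mm] 0,&\text{otherwise},\end{cases}$$ where $c_m$ is the coefficient of $x_1^m\cdots x_{n-1}^m$ in $P^m$. Consequently, with $z=\xi^k/k^k$, one has $\tilde M^k/k^k=z\exp\big(\sum_{m\ge1}\frac{(km)!}{\prod_{i=1}^n(w_im)!}\frac{z^m}{m}\big)$, which is independent of $\epsilon_1,\dots,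\epsilon_{n-1}$.
   Context: The value of $\exp(-\log\psi)=\psi^{-1}$ does not depend on the branch chosen for $\log\psi$. *)

(* Defs.v *)
From Stdlib Require Import Reals Lra List Arith.
Open Scope R_scope.

Definition CC : Type := (R * R)%type.
Definition RtoC (r : R) : CC := (r, 0).
Definition Czero : CC := (0, 0).
Definition Cone : CC := (1, 0).
Definition Cadd (z w : CC) : CC := (fst z + fst w, snd z + snd w).
Definition Copp (z : CC) : CC := (- fst z, - snd z).
Definition Csub (z w : CC) : CC := Cadd z (Copp w).
Definition Cmul (z w : CC) : CC :=
  (fst z * fst w - snd z * snd w, fst z * snd w + snd z * fst w).
Definition Cinv (z : CC) : CC :=
  (fst z / (fst z * fst z + snd z * snd z),
   - snd z / (fst z * fst z + snd z * snd z)).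
Definition Cdiv (z w : CC) : CC := Cmul z (Cinv w).
Fixpoint Cpow (z : CC) (m : nat) : CC :=
  match m with O => Cone | S m' => Cmul z (Cpow z m') end.
Definition Cnorm (z : CC) : R := sqrt (fst z * fst z + snd z * snd z).
Definition Cexp (z : CC) : CC := (exp (fst z) * cos (snd z), exp (fst z) * sin (snd z)).
(** principal argument, in (-PI, PI] *)
Definition Arg (z : CC) : R :=
  let x := fst z in let y := snd z in
  if Rlt_dec 0 x then atan (y / x)
  else if Rlt_dec x 0 then
    (if Rle_dec 0 y then atan (y / x) + PI else atan (y / x) - PI)
  else if Rlt_dec 0 y then PI / 2
  else if Rlt_dec y 0 then - (PI / 2) else 0.
Definition CLog (z : CC) : CC := (ln (Cnorm z), Arg z).

Definition Csum (l : list CC) : CC := fold_right Cadd Czero l.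
Definition Cprod (l : list CC) : CC := fold_right Cmul Cone l.

Definition Ccv (u : nat -> CC) (l : CC) : Prop :=
  forall e : R, 0 < e -> exists N0 : nat, forall N : nat, (N0 <= N)%nat ->
    Cnorm (Csub (u N) l) < e.

Definition Cseries1 (a : nat -> CC) (S : CC) : Prop :=
  Ccv (fun N => Csum (map a (seq 1 N))) S.

(** Sum of F over all a : nat -> nat with a j < N for j < d
    (the values a j for j >= d are 0). *)
Fixpoint gridsum (d N : nat) (F : (nat -> nat) -> CC) : CC :=
  match d with
  | O => F (fun _ => O)
  | S d' => Csum (map (fun a =>
              gridsum d' N (fun b => F (fun j => if Nat.eqb j d' then a else b j)))
              (seq 0 N))
  end.

Definition torus_pt (eps : nat -> R) (N : nat) (a : nat -> nat) : nat -> CC :=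
  fun j => Cmul (RtoC (eps j)) (Cexp (0, 2 * PI * INR (a j) / INR N)).

(** Uniform-grid Riemann sum (with N^d cells) of
    (1/(2 pi i)^d) \oint_{C_eps} g(x) dx_1/x_1 ... dx_d/x_d
    = (1/(2 pi)^d) \int_{[0,2pi]^d} g(eps e^{i theta}) dtheta. *)
Definition torus_riemann_sum (d : nat) (eps : nat -> R) (g : (nat -> CC) -> CC) (N : nat) : CC :=
  Cmul (RtoC (/ (INR N ^ d))) (gridsum d N (fun a => g (torus_pt eps N a))).

(** The normalized contour integral (1/(2 pi i)^d) \oint_{C_eps} g dx/x equals I:
    I is the limit of the Riemann sums. *)
Definition torus_integral_is (d : nat) (eps : nat -> R) (g : (nat -> CC) -> CC) (I : CC) : Prop :=
  Ccv (torus_riemann_sum d eps g) I.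

(** * The data of the theorem (indices shifted to start at 0:
      k_1..k_n  ~  k 0 .. k (n-1);  x_1..x_{n-1} ~ x 0 .. x (n-2)). *)

Definition lcmk (n : nat) (k : nat -> nat) : nat :=
  fold_right Nat.lcm 1%nat (map k (seq 0 n)).

Definition Ppoly (n : nat) (k : nat -> nat) (x : nat -> CC) : CC :=
  Cadd (Csum (map (fun j => Cpow (x j) (k j)) (seq 0 (n - 1)))) Cone.

Definition Pratio (n : nat) (k : nat -> nat) (x : nat -> CC) : CC :=
  Cdiv (Ppoly n k x)
       (Cmul (RtoC (INR (lcmk n k))) (Cprod (map x (seq 0 (n - 1))))).

Definition cm (n : nat) (k : nat -> nat) (m : nat) : R :=
  if Nat.eqb (m mod (lcmk n k)) 0
  then INR (fact m) / fold_right Rmult 1 (map (fun i => INR (fact (m / k i))) (seq 0 n))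
  else 0.

Definition wt (n : nat) (k : nat -> nat) (i : nat) : nat := (lcmk n k / k i)%nat.

Definition dm (n : nat) (k : nat -> nat) (m : nat) : R :=
  INR (fact (lcmk n k * m)) /
  fold_right Rmult 1 (map (fun i => INR (fact (wt n k i * m))) (seq 0 n)).

(* Main.v *)
Require Import Defs.
From Stdlib Require Import Reals List Arith Lra Lia Psatz ZArith.
Open Scope R_scope.
Import ListNotations.

Ltac cdes := repeat match goal with z : CC |- _ => destruct z end.
Ltac cunf := unfold Csub, Cdiv, Cadd, Cmul, Copp, RtoC, Czero, Cone in *; simpl in *.
Ltac cring := cdes; cunf; f_equal; ring.

Lemma Cadd_comm z w : Cadd z w = Cadd w z. Proof. cring. Qed.
Lemma Cadd_assoc z w v : Cadd z (Cadd w v) = Cadd (Cadd z w) v. Proof. cring. Qed.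
Lemma Cadd_0_l z : Cadd Czero z = z. Proof. cring. Qed.
Lemma Cadd_0_r z : Cadd z Czero = z. Proof. cring. Qed.
Lemma Cmul_comm z w : Cmul z w = Cmul w z. Proof. cring. Qed.
Lemma Cmul_assoc z w v : Cmul z (Cmul w v) = Cmul (Cmul z w) v. Proof. cring. Qed.
Lemma Cmul_1_l z : Cmul Cone z = z. Proof. cring. Qed.
Lemma Cmul_1_r z : Cmul z Cone = z. Proof. cring. Qed.
Lemma Cmul_0_l z : Cmul Czero z = Czero. Proof. cring. Qed.
Lemma Cmul_0_r z : Cmul z Czero = Czero. Proof. cring. Qed.
Lemma Cmul_add_l z w v : Cmul (Cadd z w) v = Cadd (Cmul z v) (Cmul w v). Proof. cring. Qed.
Lemma Cmul_add_r z w v : Cmul v (Cadd z w) = Cadd (Cmul v z) (Cmul v w). Proof. cring. Qed.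
Lemma RtoC_mul a b : RtoC (a * b) = Cmul (RtoC a) (RtoC b). Proof. cring. Qed.
Lemma RtoC_add a b : RtoC (a + b) = Cadd (RtoC a) (RtoC b). Proof. cring. Qed.
Lemma RtoC_0 : RtoC 0 = Czero. Proof. reflexivity. Qed.
Lemma RtoC_1 : RtoC 1 = Cone. Proof. reflexivity. Qed.
Lemma Cmul_opp_l z w : Cmul (Copp z) w = Copp (Cmul z w). Proof. cring. Qed.
Lemma Copp_add z w : Copp (Cadd z w) = Cadd (Copp z) (Copp w). Proof. cring. Qed.
Lemma Csub_diag z : Csub z z = Czero. Proof. cring. Qed.

Lemma Cpow_add z a b : Cpow z (a + b) = Cmul (Cpow z a) (Cpow z b).
Proof. induction a; simpl. - now rewrite Cmul_1_l. - rewrite IHa. apply Cmul_assoc. Qed.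
Lemma Cpow_mul z w m : Cpow (Cmul z w) m = Cmul (Cpow z m) (Cpow w m).
Proof. induction m; simpl. - unfold Cmul, Cone; simpl; f_equal; ring. - rewrite IHm. generalize (Cpow z m) (Cpow w m); intros; cring. Qed.
Lemma Cpow_RtoC a m : Cpow (RtoC a) m = RtoC (a ^ m).
Proof. induction m; simpl. - reflexivity. - rewrite IHm, RtoC_mul. reflexivity. Qed.
Lemma Cpow_1 m : Cpow Cone m = Cone.
Proof. induction m; simpl; [reflexivity|]. rewrite IHm. apply Cmul_1_l. Qed.
Lemma Cpow_S_r z m : Cpow z (S m) = Cmul (Cpow z m) z.
Proof. rewrite <- Nat.add_1_r, Cpow_add. simpl. now rewrite Cmul_1_r. Qed.

Definition nsq (z : CC) := fst z * fst z + snd z * snd z.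
Lemma nsq_nonneg z : 0 <= nsq z. Proof. unfold nsq; nra. Qed.
Lemma Cnorm_nonneg z : 0 <= Cnorm z. Proof. apply sqrt_pos. Qed.
Lemma nsq_mul z w : nsq (Cmul z w) = nsq z * nsq w. Proof. cdes; unfold nsq; cunf; ring. Qed.
Lemma Cnorm_mul z w : Cnorm (Cmul z w) = Cnorm z * Cnorm w.
Proof. unfold Cnorm. fold (nsq (Cmul z w)) (nsq z) (nsq w). rewrite nsq_mul.
  apply sqrt_mult; apply nsq_nonneg. Qed.
Lemma Cnorm_RtoC a : Cnorm (RtoC a) = Rabs a.
Proof. unfold Cnorm, RtoC; simpl. rewrite Rmult_0_l, Rplus_0_r. apply sqrt_Rsqr_abs. Qed.
Lemma Cnorm_sq z : Cnorm z * Cnorm z = nsq z.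
Proof. unfold Cnorm. apply sqrt_sqrt, nsq_nonneg. Qed.
Lemma Cnorm_pow z m : Cnorm (Cpow z m) = Cnorm z ^ m.
Proof. induction m; simpl. - unfold Cnorm; simpl. replace (1*1+0*0) with 1 by ring. apply sqrt_1.
  - rewrite Cnorm_mul, IHm. reflexivity. Qed.
Lemma Cnorm_le_sq z r : 0 <= r -> nsq z <= r * r -> Cnorm z <= r.
Proof. intros. unfold Cnorm. fold (nsq z). rewrite <- (sqrt_square r) by auto.
  apply sqrt_le_1_alt; auto. Qed.
Lemma Cnorm_triangle z w : Cnorm (Cadd z w) <= Cnorm z + Cnorm w.
Proof. apply Cnorm_le_sq. - pose proof (Cnorm_nonneg z); pose proof (Cnorm_nonneg w); lra.
  - pose proof (Cnorm_sq z); pose proof (Cnorm_sq w).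
    pose proof (Cnorm_nonneg z); pose proof (Cnorm_nonneg w).
    destruct z as [x1 y1], w as [x2 y2]; unfold nsq in *; cunf.
    set (a := Cnorm (x1,y1)) in *. set (b := Cnorm (x2,y2)) in *.
    assert (x1*x2+y1*y2 <= a*b).
    { destruct (Rle_dec (x1*x2+y1*y2) 0). - nra.
      - apply Rsqr_incr_0_var. unfold Rsqr. 
        replace (a*b*(a*b)) with ((a*a)*(b*b)) by ring. rewrite H, H0.
        assert (0 <= (x1*y2-y1*x2)*(x1*y2-y1*x2)) by apply Rle_0_sqr. nra.
        apply Rmult_le_pos; auto. }
    nra. Qed.
Lemma Cnorm_opp z : Cnorm (Copp z) = Cnorm z.
Proof. unfold Cnorm, Copp; simpl. f_equal. destruct z; simpl; ring. Qed.
Lemma Cnorm_fst z : Rabs (fst z) <= Cnorm z.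
Proof. unfold Cnorm. rewrite <- sqrt_Rsqr_abs. apply sqrt_le_1_alt. unfold Rsqr. pose proof (Rle_0_sqr (snd z)). unfold Rsqr in H. lra. Qed.
Lemma Cnorm_snd z : Rabs (snd z) <= Cnorm z.
Proof. unfold Cnorm. rewrite <- sqrt_Rsqr_abs. apply sqrt_le_1_alt. unfold Rsqr. pose proof (Rle_0_sqr (fst z)). unfold Rsqr in H. lra. Qed.
Lemma Cnorm_le_sum z : Cnorm z <= Rabs (fst z) + Rabs (snd z).
Proof. apply Cnorm_le_sq. pose proof (Rabs_pos (fst z)); pose proof (Rabs_pos (snd z)); lra.
  unfold nsq. pose proof (Rabs_pos (fst z)); pose proof (Rabs_pos (snd z)).
  assert (Rabs (fst z) * Rabs (fst z) = fst z * fst z) by (rewrite <- Rabs_mult; apply Rabs_right; nra).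
  assert (Rabs (snd z) * Rabs (snd z) = snd z * snd z) by (rewrite <- Rabs_mult; apply Rabs_right; nra).
  nra. Qed.
Lemma Cnorm_eq0 z : Cnorm z = 0 -> z = Czero.
Proof. intros H. pose proof (Cnorm_sq z). rewrite H in H0. unfold nsq in H0.
  destruct z as [x y]; simpl in *. unfold Czero. f_equal; nra. Qed.
Lemma Cnorm_Czero : Cnorm Czero = 0.
Proof. unfold Cnorm, Czero; simpl. replace (0*0+0*0) with 0 by ring. apply sqrt_0. Qed.
Lemma Cmul_integral z w : Cmul z w = Czero -> z = Czero \/ w = Czero.
Proof. intros H. assert (Cnorm z * Cnorm w = 0) by (rewrite <- Cnorm_mul, H; apply Cnorm_Czero).
  apply Rmult_integral in H0. destruct H0; [left|right]; now apply Cnorm_eq0. Qed.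

Lemma nsq_pos z : z <> Czero -> 0 < nsq z.
Proof. intros H. destruct (Rle_lt_or_eq_dec 0 (nsq z) (nsq_nonneg z)); auto.
  exfalso. apply H. destruct z as [x y]; unfold nsq in *; simpl in *. unfold Czero; f_equal; nra. Qed.
Lemma Cmul_inv_r z : z <> Czero -> Cmul z (Cinv z) = Cone.
Proof. intros H. pose proof (nsq_pos z H). destruct z as [x y]; unfold nsq in *; simpl in *.
  unfold Cmul, Cinv, Cone; simpl. f_equal; field; lra. Qed.
Lemma Cmul_inv_l z : z <> Czero -> Cmul (Cinv z) z = Cone.
Proof. intros; rewrite Cmul_comm; now apply Cmul_inv_r. Qed.
Lemma Cmul_neq0 z w : z <> Czero -> w <> Czero -> Cmul z w <> Czero.
Proof. intros H1 H2 H. apply Cmul_integral in H. tauto. Qed.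
Lemma Cinv_unique z w : z <> Czero -> Cmul z w = Cone -> w = Cinv z.
Proof. intros H E. rewrite <- (Cmul_1_l w). rewrite <- (Cmul_inv_l z H).
  rewrite <- Cmul_assoc, E. apply Cmul_1_r. Qed.
Lemma Cinv_mul z w : z <> Czero -> w <> Czero -> Cinv (Cmul z w) = Cmul (Cinv z) (Cinv w).
Proof. intros. symmetry. apply Cinv_unique. now apply Cmul_neq0.
  replace (Cmul (Cmul z w) (Cmul (Cinv z) (Cinv w))) with
    (Cmul (Cmul z (Cinv z)) (Cmul w (Cinv w))) by cring.
  rewrite !Cmul_inv_r by auto. apply Cmul_1_l. Qed.
Lemma Cinv_neq0 z : z <> Czero -> Cinv z <> Czero.
Proof. intros H E. pose proof (Cmul_inv_r z H). rewrite E, Cmul_0_r in H0.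
  unfold Czero, Cone in H0. injection H0; lra. Qed.
Lemma Cpow_neq0 z m : z <> Czero -> Cpow z m <> Czero.
Proof. intros H; induction m; simpl. - unfold Cone, Czero; intro E; injection E; lra.
  - now apply Cmul_neq0. Qed.
Lemma Cinv_pow z m : z <> Czero -> Cinv (Cpow z m) = Cpow (Cinv z) m.
Proof. intros H; induction m; simpl. - unfold Cinv, Cone; simpl. f_equal; field.
  - rewrite Cinv_mul, IHm; auto. now apply Cpow_neq0. Qed.
Lemma Cinv_RtoC a : a <> 0 -> Cinv (RtoC a) = RtoC (/ a).
Proof. intros. unfold Cinv, RtoC; simpl. f_equal; field; auto. Qed.
Lemma RtoC_neq0 a : a <> 0 -> RtoC a <> Czero.
Proof. intros H E; injection E; auto. Qed.
Lemma Cnorm_inv z : z <> Czero -> Cnorm (Cinv z) = / Cnorm z.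
Proof. intros H. assert (Cnorm z <> 0) by (intro E; apply H, Cnorm_eq0, E).
  apply (Rmult_eq_reg_l (Cnorm z)); auto. rewrite <- Cnorm_mul, Cmul_inv_r by auto.
  rewrite Rinv_r by auto. unfold Cnorm, Cone; simpl. replace (1*1+0*0) with 1 by ring; apply sqrt_1. Qed.

Lemma Cexp_add z w : Cexp (Cadd z w) = Cmul (Cexp z) (Cexp w).
Proof. destruct z as [a b], w as [c d]. unfold Cexp, Cadd, Cmul; simpl.
  rewrite exp_plus, cos_plus, sin_plus. f_equal; ring. Qed.
Lemma Cexp_0 : Cexp Czero = Cone.
Proof. unfold Cexp, Czero, Cone; simpl. rewrite exp_0, cos_0, sin_0. f_equal; ring. Qed.
Lemma Cexp_neq0 z : Cexp z <> Czero.
Proof. intro E. assert (Cmul (Cexp z) (Cexp (Copp z)) = Czero) by (rewrite E; apply Cmul_0_l).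
  rewrite <- Cexp_add in H. replace (Cadd z (Copp z)) with Czero in H by cring.
  rewrite Cexp_0 in H. unfold Cone, Czero in H; injection H; lra. Qed.
Lemma Cexp_opp z : Cexp (Copp z) = Cinv (Cexp z).
Proof. apply Cinv_unique. apply Cexp_neq0. rewrite <- Cexp_add.
  replace (Cadd z (Copp z)) with Czero by cring. apply Cexp_0. Qed.
Lemma Cexp_pow z m : Cpow (Cexp z) m = Cexp (Cmul (RtoC (INR m)) z).
Proof. induction m. - simpl. replace (Cmul (RtoC 0) z) with Czero by cring. now rewrite Cexp_0.
  - simpl Cpow. rewrite IHm, <- Cexp_add. f_equal. rewrite S_INR. cring. Qed.
Open Scope bool_scope. Open Scope R_scope.

Lemma Csum_app l1 l2 : Csum (l1 ++ l2) = Cadd (Csum l1) (Csum l2).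
Proof. induction l1; simpl. - now rewrite Cadd_0_l. - rewrite IHl1. apply Cadd_assoc. Qed.
Lemma Cprod_app l1 l2 : Cprod (l1 ++ l2) = Cmul (Cprod l1) (Cprod l2).
Proof. induction l1; simpl. - now rewrite Cmul_1_l. - rewrite IHl1. apply Cmul_assoc. Qed.
Lemma Csum_map_add {A} (f g : A -> CC) l :
  Csum (map (fun i => Cadd (f i) (g i)) l) = Cadd (Csum (map f l)) (Csum (map g l)).
Proof. induction l; simpl. - cring. - rewrite IHl. generalize (Csum (map f l)) (Csum (map g l)); intros; cring. Qed.
Lemma Csum_map_scal {A} c (f : A -> CC) l :
  Csum (map (fun i => Cmul c (f i)) l) = Cmul c (Csum (map f l)).
Proof. induction l; simpl. - cring. - rewrite IHl. now rewrite Cmul_add_r. Qed.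
Lemma Csum_map_ext_in {A} (f g : A -> CC) l :
  (forall i, In i l -> f i = g i) -> Csum (map f l) = Csum (map g l).
Proof. intros H. f_equal. now apply map_ext_in. Qed.
Lemma Csum_map_zero {A} (f : A -> CC) l : (forall i, In i l -> f i = Czero) -> Csum (map f l) = Czero.
Proof. induction l; simpl; intros; auto. rewrite H, IHl; auto. apply Cadd_0_l. Qed.
Lemma Csum_swap {A B} (f : A -> B -> CC) l1 l2 :
  Csum (map (fun i => Csum (map (fun j => f i j) l2)) l1) =
  Csum (map (fun j => Csum (map (fun i => f i j) l1)) l2).
Proof. induction l1; simpl. - symmetry; apply Csum_map_zero; auto.
  - rewrite IHl1. rewrite <- Csum_map_add. reflexivity. Qed.
Lemma Csum_const {A} (c : CC) (l : list A) : Csum (map (fun _ => c) l) = Cmul (RtoC (INR (length l))) c.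
Proof. induction l. - simpl. cring. - change (Csum (map (fun _ => c) (a :: l))) with (Cadd c (Csum (map (fun _ => c) l))).
  change (length (a :: l)) with (S (length l)). rewrite IHl, S_INR. generalize (INR (length l)); intros; cring. Qed.
Lemma Csum_bound {A} (f : A -> CC) l B : (forall i, In i l -> Cnorm (f i) <= B) ->
  Cnorm (Csum (map f l)) <= INR (length l) * B.
Proof. induction l; intros. - simpl. rewrite Cnorm_Czero. lra.
  - change (length (a :: l)) with (S (length l)). simpl map; simpl Csum. rewrite S_INR. eapply Rle_trans. apply Cnorm_triangle.
    specialize (IHl (fun i Hi => H i (or_intror Hi))). specialize (H a (or_introl eq_refl)). lra. Qed.
Lemma Csum_indicator (F : nat -> CC) t a len :
  Csum (map (fun b => if Nat.eqb b t then F b else Czero) (seq a len)) =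
  if (a <=? t)%nat && (t <? a + len)%nat then F t else Czero.
Proof. revert a; induction len; intros a; simpl.
  - destruct (a <=? t)%nat eqn:E1; destruct (t <? a + 0)%nat eqn:E2; simpl; auto.
    apply Nat.leb_le in E1; apply Nat.ltb_lt in E2; lia.
  - rewrite IHlen. destruct (Nat.eqb a t) eqn:E.
    + apply Nat.eqb_eq in E; subst. 
      replace ((S t <=? t)%nat) with false by (symmetry; apply Nat.leb_gt; lia).
      replace ((t <=? t)%nat) with true by (symmetry; apply Nat.leb_le; lia).
      replace ((t <? t + S len)%nat) with true by (symmetry; apply Nat.ltb_lt; lia).
      simpl. apply Cadd_0_r.
    + apply Nat.eqb_neq in E. rewrite Cadd_0_l.
      replace (S a + len)%nat with (a + S len)%nat by lia.
      destruct (S a <=? t)%nat eqn:E1; destruct (a <=? t)%nat eqn:E2; auto.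
      apply Nat.leb_le in E1; apply Nat.leb_gt in E2; lia.
      apply Nat.leb_gt in E1; apply Nat.leb_le in E2.
      destruct (t <? a + S len)%nat eqn:E3; auto. simpl. lia. Qed.
Lemma Csum_RtoC {A} (f : A -> R) l : Csum (map (fun i => RtoC (f i)) l) = RtoC (fold_right Rplus 0 (map f l)).
Proof. induction l; simpl; auto. rewrite IHl. now rewrite RtoC_add. Qed.
Lemma Cprod_RtoC {A} (f : A -> R) l : Cprod (map (fun i => RtoC (f i)) l) = RtoC (fold_right Rmult 1 (map f l)).
Proof. induction l; simpl; auto. rewrite IHl. now rewrite RtoC_mul. Qed.

Lemma gridsum_ext d N F G : (forall a, F a = G a) -> gridsum d N F = gridsum d N G.
Proof. revert F G; induction d; intros F G H; simpl. apply H.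
  f_equal. apply map_ext. intro a. apply IHd. intros; apply H. Qed.
Lemma gridsum_add d N F G : gridsum d N (fun a => Cadd (F a) (G a)) = Cadd (gridsum d N F) (gridsum d N G).
Proof. revert F G; induction d; intros F G; simpl; auto.
  rewrite <- Csum_map_add. f_equal. apply map_ext. intro a. apply IHd. Qed.
Lemma gridsum_scal d N c F : gridsum d N (fun a => Cmul c (F a)) = Cmul c (gridsum d N F).
Proof. revert F; induction d; intros F; simpl; auto.
  rewrite <- Csum_map_scal. f_equal. apply map_ext. intro a. apply IHd. Qed.
Lemma gridsum_const d N c : gridsum d N (fun _ => c) = Cmul (RtoC (INR N ^ d)) c.
Proof. induction d; simpl. - cring. - rewrite IHd, Csum_const, length_seq.
  rewrite RtoC_mul. apply Cmul_assoc. Qed.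
Lemma gridsum_bound d N F B : (forall a, Cnorm (F a) <= B) -> Cnorm (gridsum d N F) <= INR N ^ d * B.
Proof. revert F; induction d; intros F H; simpl. - rewrite Rmult_1_l; apply H.
  - eapply Rle_trans. apply Csum_bound. intros. apply IHd. intros; apply H.
  rewrite length_seq. lra. Qed.
Lemma gridsum_csum {A} d N (F : A -> (nat -> nat) -> CC) l :
  gridsum d N (fun a => Csum (map (fun i => F i a) l)) = Csum (map (fun i => gridsum d N (F i)) l).
Proof. induction l; simpl. - rewrite gridsum_const. cring.
  - rewrite gridsum_add, IHl. reflexivity. Qed.

Definition E (t : R) : CC := Cexp (0, t).
Lemma E_eq t : E t = (cos t, sin t).
Proof. unfold E, Cexp; simpl. rewrite exp_0. f_equal; ring. Qed.
Lemma E_add a b : E (a + b) = Cmul (E a) (E b).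
Proof. unfold E. rewrite <- Cexp_add. f_equal. unfold Cadd; simpl. f_equal; ring. Qed.
Lemma E_pow t p : Cpow (E t) p = E (INR p * t).
Proof. unfold E. rewrite Cexp_pow. f_equal. unfold Cmul, RtoC; simpl. f_equal; ring. Qed.
Lemma E_inv t : Cinv (E t) = E (- t).
Proof. unfold E. rewrite <- Cexp_opp. f_equal. unfold Copp; simpl. f_equal; ring. Qed.
Lemma E_0 : E 0 = Cone.
Proof. rewrite E_eq, cos_0, sin_0. reflexivity. Qed.
Lemma Cnorm_E t : Cnorm (E t) = 1.
Proof. rewrite E_eq. unfold Cnorm; simpl. rewrite <- sqrt_1. f_equal.
  pose proof (sin2_cos2 t). unfold Rsqr in H. lra. Qed.

Lemma geom w N : Cmul (Csub w Cone) (Csum (map (Cpow w) (seq 0 N))) = Csub (Cpow w N) Cone.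
Proof. induction N. - simpl. cring.
  - rewrite seq_S, map_app, Csum_app, Cmul_add_r, IHN. simpl.
    generalize (Cpow w N); intros; cring. Qed.

Lemma E_int_period (z : Z) : E (IZR z * (2 * PI)) = Cone.
Proof. rewrite E_eq. destruct (Z_le_gt_dec 0 z).
  - destruct (IZN z l) as [k ->]. rewrite <- INR_IZR_INZ.
    pose proof (cos_period 0 k); pose proof (sin_period 0 k). rewrite cos_0 in H; rewrite sin_0 in H0.
    replace (INR k * (2 * PI)) with (0 + 2 * INR k * PI) by ring. rewrite H, H0. reflexivity.
  - assert (0 <= - z)%Z by lia. destruct (IZN (-z) H) as [k Hk].
    replace z with (- Z.of_nat k)%Z by lia. rewrite opp_IZR, <- INR_IZR_INZ.
    pose proof (cos_period 0 k); pose proof (sin_period 0 k). rewrite cos_0 in H0; rewrite sin_0 in H1.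
    replace (- INR k * (2 * PI)) with (- (0 + 2 * INR k * PI)) by ring.
    rewrite cos_neg, sin_neg, H0, H1. unfold Cone. f_equal; ring. Qed.

Lemma E_neq1 t : -2*PI < t < 2*PI -> t <> 0 -> E t <> Cone.
Proof. intros H Ht E1. rewrite E_eq in E1. unfold Cone in E1. injection E1 as Hc Hs.
  destruct (sin_eq_0_0 t Hs) as [k Hk]. pose proof PI_RGT_0.
  assert (-2 < IZR k < 2). { subst t. split; nra. }
  destruct H1. apply lt_IZR in H1. apply lt_IZR in H2.
  assert (k = 0 \/ k = 1 \/ k = -1)%Z by lia. destruct H3 as [H3|[H3|H3]]; subst k.
  - apply Ht. rewrite Hk. ring.
  - rewrite Hk in Hc. rewrite Rmult_1_l, cos_PI in Hc. lra.
  - rewrite Hk in Hc. replace (IZR (-1) * PI) with (- PI) in Hc by (simpl; ring).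
    rewrite cos_neg, cos_PI in Hc. lra. Qed.

Lemma Csub_eq0 z w : Csub z w = Czero -> z = w.
Proof. destruct z, w; unfold Csub, Cadd, Copp, Czero; simpl. intro H; injection H; intros; f_equal; lra. Qed.

Lemma root_sum_E (N : nat) (z : Z) : (0 < N)%nat -> (- Z.of_nat N < z < Z.of_nat N)%Z ->
  Csum (map (fun a => E (INR a * (IZR z * (2 * PI) / INR N))) (seq 0 N)) =
  if Z.eqb z 0 then RtoC (INR N) else Czero.
Proof. intros HN Hz. destruct (Z.eqb_spec z 0).
  - subst. rewrite (Csum_map_ext_in _ (fun _ => Cone)). rewrite Csum_const, length_seq. cring.
    intros. replace (INR i * (0 * (2*PI) / INR N)) with 0. apply E_0. simpl; field. apply not_0_INR; lia.
  - set (w := E (IZR z * (2 * PI) / INR N)).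
    rewrite (Csum_map_ext_in _ (Cpow w)) by (intros; unfold w; now rewrite E_pow).
    assert (Hw : Csub w Cone <> Czero).
    { intro H. apply Csub_eq0 in H. revert H. apply E_neq1.
      assert (0 < INR N) by (apply lt_0_INR; lia). pose proof PI_RGT_0.
      assert (- INR N < IZR z < INR N).
      { rewrite INR_IZR_INZ, <- opp_IZR. split; apply IZR_lt; lia. }
      split.
      + apply Rmult_lt_reg_r with (INR N); auto. replace (IZR z * (2 * PI) / INR N * INR N) with (IZR z * (2*PI)) by (field; lra). nra.
      + apply Rmult_lt_reg_r with (INR N); auto. replace (IZR z * (2 * PI) / INR N * INR N) with (IZR z * (2*PI)) by (field; lra). nra.
      + intro H2. apply n. apply eq_IZR. unfold Rdiv in H2. apply Rmult_integral in H2.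
        destruct H2 as [H2|H2]. apply Rmult_integral in H2. destruct H2 as [H2|H2]; auto. pose proof PI_RGT_0. lra.
        exfalso. revert H2. apply Rinv_neq_0_compat. apply not_0_INR; lia. }
    pose proof (geom w N). unfold w at 3 in H. rewrite E_pow in H.
    replace (INR N * (IZR z * (2 * PI) / INR N)) with (IZR z * (2 * PI)) in H
      by (field; apply not_0_INR; lia).
    rewrite E_int_period, Csub_diag in H. apply Cmul_integral in H. tauto. Qed.

Lemma ypow e t p m : 0 < e ->
  Cmul (Cpow (Cmul (RtoC e) (E t)) p) (Cpow (Cinv (Cmul (RtoC e) (E t))) m) =
  Cmul (RtoC (e ^ p * (/ e) ^ m)) (E ((INR p - INR m) * t)).
Proof. intros He.
  assert (HE : E t <> Czero) by apply Cexp_neq0.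
  assert (He0 : e <> 0) by lra.
  rewrite Cinv_mul, Cinv_RtoC, E_inv; auto using RtoC_neq0.
  rewrite !Cpow_mul, !Cpow_RtoC, !E_pow.
  replace ((INR p - INR m) * t) with (INR p * t + INR m * - t) by ring.
  rewrite E_add, RtoC_mul. generalize (E (INR p * t)) (E (INR m * - t)); intros; cring. Qed.

Lemma root_sum e N p m : 0 < e -> (0 < N)%nat -> (p < N)%nat -> (m < N)%nat ->
  Csum (map (fun a => Cmul (Cpow (Cmul (RtoC e) (Cexp (0, 2 * PI * INR a / INR N))) p)
                          (Cpow (Cinv (Cmul (RtoC e) (Cexp (0, 2 * PI * INR a / INR N)))) m)) (seq 0 N))
  = if Nat.eqb p m then RtoC (INR N) else Czero.
Proof. intros He HN Hp Hm.
  rewrite (Csum_map_ext_in _ (fun a => Cmul (RtoC (e ^ p * (/ e) ^ m))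
     (E (INR a * (IZR (Z.of_nat p - Z.of_nat m) * (2 * PI) / INR N))))).
  2:{ intros a _. fold (E (2 * PI * INR a / INR N)). rewrite ypow by auto. f_equal. f_equal.
      rewrite minus_IZR, <- !INR_IZR_INZ. field. apply not_0_INR; lia. }
  rewrite Csum_map_scal, root_sum_E by lia.
  destruct (Nat.eqb_spec p m).
  - subst. replace (Z.of_nat m - Z.of_nat m =? 0)%Z with true by (symmetry; apply Z.eqb_eq; lia).
    rewrite <- Rpow_mult_distr, Rinv_r, pow1 by lra. cring.
  - replace (Z.of_nat p - Z.of_nat m =? 0)%Z with false by (symmetry; apply Z.eqb_neq; lia).
    apply Cmul_0_r. Qed.

Fixpoint binom (n k : nat) : nat := match n, k with
 | _, O => 1%nat | O, S _ => 0%nat | S n', S k' => (binom n' k' + binom n' (S k'))%nat end.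

Lemma binom_gt n k : (n < k)%nat -> binom n k = 0%nat.
Proof. revert k; induction n; intros [|k] H; simpl; try lia; auto.
  rewrite !IHn; lia. Qed.
Lemma binom_diag n : binom n n = 1%nat.
Proof. induction n; simpl; auto. rewrite IHn, binom_gt; lia. Qed.
Lemma binom_fact n k : (k <= n)%nat -> (binom n k * fact k * fact (n - k) = fact n)%nat.
Proof. revert k; induction n; intros [|k] H; simpl binom.
  - reflexivity. - lia. - simpl. lia.
  - destruct (Nat.eq_dec k n).
    + subst. rewrite binom_diag, binom_gt by lia. rewrite Nat.sub_diag. simpl. lia.
    + assert (k < n)%nat by lia.
      pose proof (IHn k ltac:(lia)) as H0'. pose proof (IHn (S k) ltac:(lia)) as H1.
      replace (S n - S k)%nat with (n - k)%nat by lia.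
      assert (E1 : fact (n - k) = ((n - k) * fact (n - S k))%nat).
      { replace (n - k)%nat with (S (n - S k)) by lia. reflexivity. }
      assert (E2 : fact (S k) = (S k * fact k)%nat) by reflexivity.
      assert (E3 : fact (S n) = (S n * fact n)%nat) by reflexivity.
      rewrite E1 in H0' |- *. rewrite E2 in H1 |- *. rewrite E3.
      set (a := binom n k) in *. set (b := binom n (S k)) in *.
      set (fk := fact k) in *. set (fm := fact (n - S k)) in *. set (fn := fact n) in *.
      assert (a * (S k * fk) * ((n - k) * fm) = S k * fn)%nat by (rewrite <- H0'; ring).
      assert (b * (S k * fk) * ((n - k) * fm) = (n - k) * fn)%nat by (rewrite <- H1; ring).
      rewrite Nat.mul_add_distr_r, Nat.mul_add_distr_r, H2, H3. 
      replace (S n) with (S k + (n - k))%nat by lia. ring. Qed.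

Lemma binom_0 n : binom n 0 = 1%nat. Proof. destruct n; reflexivity. Qed.

Definition CS (f : nat -> CC) n := Csum (map f (seq 0 n)).
Lemma CS_front f n : CS f (S n) = Cadd (f 0%nat) (CS (fun i => f (S i)) n).
Proof. unfold CS. simpl. f_equal. rewrite <- seq_shift, map_map. reflexivity. Qed.
Lemma CS_back f n : CS f (S n) = Cadd (CS f n) (f n).
Proof. unfold CS. rewrite seq_S, map_app, Csum_app. simpl. now rewrite Cadd_0_r. Qed.
Lemma CS_ext f g n : (forall i, (i < n)%nat -> f i = g i) -> CS f n = CS g n.
Proof. intros H. unfold CS. apply Csum_map_ext_in. intros i Hi. apply in_seq in Hi. apply H; lia. Qed.
Lemma CS_add f g n : CS (fun i => Cadd (f i) (g i)) n = Cadd (CS f n) (CS g n).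
Proof. apply Csum_map_add. Qed.
Lemma CS_scal c f n : CS (fun i => Cmul c (f i)) n = Cmul c (CS f n).
Proof. apply Csum_map_scal. Qed.

Lemma binomial A y r : Cpow (Cadd A y) r =
  CS (fun b => Cmul (RtoC (INR (binom r b))) (Cmul (Cpow y b) (Cpow A (r - b)))) (S r).
Proof. induction r.
  - unfold CS; simpl. cring.
  - change (Cpow (Cadd A y) (S r)) with (Cmul (Cadd A y) (Cpow (Cadd A y) r)).
    rewrite IHr, Cmul_add_l, <- !CS_scal.
    rewrite (CS_front (fun b => Cmul (RtoC (INR (binom (S r) b))) _)).
    simpl binom at 1.
    rewrite (CS_ext (fun i => Cmul (RtoC (INR (binom (S r) (S i)))) _)
      (fun i => Cadd (Cmul (RtoC (INR (binom r i))) (Cmul (Cpow y (S i)) (Cpow A (r - i))))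
                     (Cmul (RtoC (INR (binom r (S i)))) (Cmul (Cpow y (S i)) (Cpow A (r - i)))))).
    2:{ intros i Hi. simpl binom. rewrite plus_INR, RtoC_add. replace (S r - S i)%nat with (r - i)%nat by lia.
        generalize (RtoC (INR (binom r i))) (RtoC (INR (binom r (S i)))) (Cmul (Cpow y (S i)) (Cpow A (r - i))).
        intros; cring. }
    rewrite CS_add.
    rewrite (CS_ext (fun i => Cmul y _) (fun i => Cmul (RtoC (INR (binom r i))) (Cmul (Cpow y (S i)) (Cpow A (r - i))))).
    2:{ intros i Hi. simpl Cpow. generalize (RtoC (INR (binom r i))) (Cpow y i) (Cpow A (r - i)). intros; cring. }
    rewrite (CS_front (fun i => Cmul A _)).
    rewrite (CS_back (fun i => Cmul (RtoC (INR (binom r (S i)))) _)).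
    rewrite binom_gt with (k := S r) by lia.
    rewrite (CS_ext (fun i => Cmul A (Cmul (RtoC (INR (binom r (S i)))) _))
                    (fun i => Cmul (RtoC (INR (binom r (S i)))) (Cmul (Cpow y (S i)) (Cpow A (r - i))))).
    2:{ intros i Hi. replace (r - S i)%nat with (pred (r - i)) by lia.
        replace (r - i)%nat with (S (pred (r - i))) at 2 by lia. simpl Cpow.
        generalize (RtoC (INR (binom r (S i)))) (Cmul y (Cpow y i)) (Cpow A (pred (r - i))). intros; cring. }
    rewrite binom_0. rewrite Nat.sub_0_r. simpl Cpow.
    generalize (CS (fun i : nat => Cmul (RtoC (INR (binom r i))) (Cmul (Cmul y (Cpow y i)) (Cpow A (r - i)))) (S r)).
    generalize (Cmul (Cmul y (Cpow y r)) (Cpow A (r - r))).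
    generalize (Cpow A r). intros; cdes; cunf; f_equal; ring. Qed.

Lemma Cpow_pow z a b : Cpow (Cpow z a) b = Cpow z (a * b).
Proof. induction b; simpl. - now rewrite Nat.mul_0_r. - rewrite IHb, <- Cpow_add. f_equal. lia. Qed.

Definition Sd (k : nat -> nat) d (x : nat -> CC) := Csum (map (fun j => Cpow (x j) (k j)) (seq 0 d)).
Definition Id m d (x : nat -> CC) := Cprod (map (fun j => Cpow (Cinv (x j)) m) (seq 0 d)).
Definition G k m d r x := Cmul (Cpow (Cadd (Sd k d x) Cone) r) (Id m d x).
Fixpoint V (k : nat -> nat) m d r : R :=
  match d with O => 1 | S d' =>
    if (Nat.eqb (m mod k d') 0) && (m / k d' <=? r)%nat
    then INR (binom r (m / k d')) * V k m d' (r - m / k d')%nat else 0 end.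

Lemma Sd_S k d x : Sd k (S d) x = Cadd (Sd k d x) (Cpow (x d) (k d)).
Proof. unfold Sd. rewrite seq_S, map_app, Csum_app. simpl. now rewrite Cadd_0_r. Qed.
Lemma Id_S m d x : Id m (S d) x = Cmul (Id m d x) (Cpow (Cinv (x d)) m).
Proof. unfold Id. rewrite seq_S, map_app, Cprod_app. simpl. now rewrite Cmul_1_r. Qed.
Lemma G_ext k m d r x x' : (forall j, (j < d)%nat -> x j = x' j) -> G k m d r x = G k m d r x'.
Proof. intros H. unfold G, Sd, Id. f_equal. f_equal. f_equal. f_equal. apply map_ext_in.
  intros j Hj. apply in_seq in Hj. rewrite H; auto; lia.
  f_equal. apply map_ext_in. intros j Hj. apply in_seq in Hj. rewrite H; auto; lia. Qed.

Lemma G_S k m d r x : G k m (S d) r x =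
  CS (fun b => Cmul (RtoC (INR (binom r b)))
       (Cmul (Cmul (Cpow (x d) (k d * b)) (Cpow (Cinv (x d)) m)) (G k m d (r - b) x))) (S r).
Proof. unfold G at 1. rewrite Sd_S, Id_S.
  replace (Cadd (Cadd (Sd k d x) (Cpow (x d) (k d))) Cone) with
          (Cadd (Cadd (Sd k d x) Cone) (Cpow (x d) (k d))) by (generalize (Sd k d x) (Cpow (x d) (k d)); intros; cring).
  rewrite binomial. unfold CS. rewrite Cmul_comm, <- Csum_map_scal. apply Csum_map_ext_in. intros b _.
  unfold G. rewrite Cpow_pow.
  generalize (Id m d x) (Cpow (Cinv (x d)) m) (RtoC (INR (binom r b))) (Cpow (x d) (k d * b))
    (Cpow (Cadd (Sd k d x) Cone) (r - b)). intros; cring. Qed.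

Lemma claim k m eps N d : (0 < N)%nat -> (m < N)%nat ->
  (forall j, (j < d)%nat -> (0 < k j)%nat) -> (forall j, (j < d)%nat -> 0 < eps j) ->
  (forall j, (j < d)%nat -> (k j * m < N)%nat) ->
  forall r, (r <= m)%nat ->
  gridsum d N (fun a => G k m d r (torus_pt eps N a)) = RtoC (INR N ^ d * V k m d r).
Proof. intros HN Hm. induction d; intros Hk He HkN r Hr.
  - simpl. unfold G, Sd, Id; simpl. rewrite Cadd_0_l, Cpow_1. cring.
  - simpl gridsum.
    set (y := fun a => Cmul (RtoC (eps d)) (Cexp (0, 2 * PI * INR a / INR N))).
    rewrite (Csum_map_ext_in _ (fun a => CS (fun b => Cmul (Cmul (RtoC (INR (binom r b)))
       (Cmul (Cpow (y a) (k d * b)) (Cpow (Cinv (y a)) m))) (RtoC (INR N ^ d * V k m d (r - b)))) (S r))).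
    2:{ intros a _. rewrite (gridsum_ext _ _ _ (fun bb => CS (fun b => Cmul (Cmul (RtoC (INR (binom r b)))
       (Cmul (Cpow (y a) (k d * b)) (Cpow (Cinv (y a)) m))) (G k m d (r - b) (torus_pt eps N bb))) (S r))).
      - unfold CS. rewrite gridsum_csum. apply Csum_map_ext_in. intros b Hb. apply in_seq in Hb.
        rewrite gridsum_scal, IHd; auto; try lia.
      - intros bb. rewrite G_S. apply CS_ext. intros b Hb.
        rewrite (G_ext _ _ _ _ _ (torus_pt eps N bb)).
        + unfold torus_pt at 1 2. rewrite Nat.eqb_refl. fold (y a).
          generalize (RtoC (INR (binom r b))) (Cmul (Cpow (y a) (k d * b)) (Cpow (Cinv (y a)) m)).
          generalize (G k m d (r - b) (torus_pt eps N bb)). intros; cring.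
        + intros j Hj. unfold torus_pt. replace (Nat.eqb j d) with false by (symmetry; apply Nat.eqb_neq; lia).
          reflexivity. }
    unfold CS. rewrite Csum_swap.
    rewrite (Csum_map_ext_in _ (fun b => Cmul (Cmul (RtoC (INR (binom r b)))
        (if Nat.eqb (k d * b) m then RtoC (INR N) else Czero)) (RtoC (INR N ^ d * V k m d (r - b))))).
    2:{ intros b Hb. apply in_seq in Hb.
        rewrite (Csum_map_ext_in _ (fun a => Cmul (Cmul (RtoC (INR (binom r b))) (RtoC (INR N ^ d * V k m d (r - b))))
              (Cmul (Cpow (y a) (k d * b)) (Cpow (Cinv (y a)) m)))).
        2:{ intros; generalize (Cmul (Cpow (y i) (k d * b)) (Cpow (Cinv (y i)) m)); intros; cring. }
        rewrite Csum_map_scal. unfold y. rewrite root_sum; auto; try lia.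
        2:{ pose proof (HkN d ltac:(lia)). nia. }
        generalize (if Nat.eqb (k d * b) m then RtoC (INR N) else Czero); intros; cring. }
    assert (Hkd : (0 < k d)%nat) by (apply Hk; lia).
    simpl V. destruct (Nat.eqb_spec (m mod k d) 0) as [Hmod|Hmod].
    + set (t := (m / k d)%nat).
      assert (Hmt : m = (k d * t)%nat) by (unfold t; apply Nat.Div0.div_exact; auto).
      rewrite (Csum_map_ext_in _ (fun b => if Nat.eqb b t then Cmul (RtoC (INR (binom r b))) (Cmul (RtoC (INR N))
                 (RtoC (INR N ^ d * V k m d (r - b)))) else Czero)).
      2:{ intros b _. destruct (Nat.eqb_spec b t).
          - subst b. rewrite <- Hmt, Nat.eqb_refl. generalize (RtoC (INR (binom r t))); intros; cring.
          - replace (Nat.eqb (k d * b) m) with false. cring. symmetry; apply Nat.eqb_neq. intro; apply n. nia. }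
      rewrite Csum_indicator. simpl andb.
      replace (t <? S r)%nat with (t <=? r)%nat.
      2:{ destruct (Nat.leb_spec t r); destruct (Nat.ltb_spec t (S r)); auto; lia. }
      destruct (t <=? r)%nat.
      * rewrite <- !RtoC_mul. apply (f_equal RtoC). simpl. ring.
      * apply (f_equal RtoC). ring.
    + rewrite Csum_map_zero. simpl andb. rewrite Rmult_0_r. reflexivity.
      intros b _. replace (Nat.eqb (k d * b) m) with false. cring.
      symmetry; apply Nat.eqb_neq. intro E1. apply Hmod. subst m.
      rewrite Nat.mul_comm. apply Nat.Div0.mod_mul. Qed.

Definition allk (k : nat -> nat) m d := forallb (fun j => Nat.eqb (m mod k j) 0) (seq 0 d).
Definition sk (k : nat -> nat) (m d : nat) := fold_right Nat.add 0%nat (map (fun j => (m / k j)%nat) (seq 0 d)).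
Definition pf (k : nat -> nat) (m d : nat) := fold_right Rmult 1 (map (fun j => INR (fact (m / k j))) (seq 0 d)).

Lemma fold_add_app l a : fold_right Nat.add 0%nat (l ++ [a]) = (fold_right Nat.add 0%nat l + a)%nat.
Proof. induction l; simpl; lia. Qed.
Lemma fold_mul_app l a : fold_right Rmult 1 (l ++ [a]) = fold_right Rmult 1 l * a.
Proof. induction l; simpl. ring. rewrite IHl. ring. Qed.
Lemma allk_S k m d : allk k m (S d) = allk k m d && Nat.eqb (m mod k d) 0.
Proof. unfold allk. rewrite seq_S, forallb_app. simpl. now rewrite Bool.andb_true_r. Qed.
Lemma sk_S k m d : sk k m (S d) = (sk k m d + m / k d)%nat.
Proof. unfold sk. rewrite seq_S, map_app. apply fold_add_app. Qed.
Lemma pf_S k m d : pf k m (S d) = pf k m d * INR (fact (m / k d)).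
Proof. unfold pf. rewrite seq_S, map_app. apply fold_mul_app. Qed.
Lemma pf_pos k m d : 0 < pf k m d.
Proof. unfold pf. induction (seq 0 d); simpl. lra. apply Rmult_lt_0_compat; auto. apply lt_0_INR, lt_O_fact. Qed.
Lemma fact_pos n : 0 < INR (fact n). Proof. apply lt_0_INR, lt_O_fact. Qed.

Lemma binom_R r q : (q <= r)%nat -> INR (binom r q) = INR (fact r) / (INR (fact q) * INR (fact (r - q))).
Proof. intros H. rewrite <- (binom_fact r q H), !mult_INR. field.
  split; apply Rgt_not_eq, fact_pos. Qed.

Lemma V_closed k m d r : V k m d r =
  if allk k m d && (sk k m d <=? r)%nat then INR (fact r) / (pf k m d * INR (fact (r - sk k m d))) else 0.
Proof. revert r; induction d; intros r.
  - simpl. unfold allk, sk, pf; simpl. rewrite Nat.sub_0_r. field. apply Rgt_not_eq, fact_pos.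
  - simpl V. rewrite IHd, allk_S, sk_S, pf_S.
    set (q := (m / k d)%nat). set (s := sk k m d).
    destruct (Nat.eqb (m mod k d) 0); destruct (allk k m d); simpl andb;
    destruct (Nat.leb_spec q r); destruct (Nat.leb_spec s (r - q)); destruct (Nat.leb_spec (s + q) r);
    try lia; try ring.
    rewrite binom_R by lia. replace (r - q - s)%nat with (r - (s + q))%nat by lia.
    pose proof (pf_pos k m d). pose proof (fact_pos q). pose proof (fact_pos (r - q)). pose proof (fact_pos (r - (s+q))).
    field. repeat split; lra. Qed.

Lemma lcm_list_div (k : nat -> nat) l i : In i l -> Nat.divide (k i) (fold_right Nat.lcm 1%nat (map k l)).
Proof. induction l; simpl; intros H; [contradiction|]. destruct H as [->|H].
  - apply Nat.divide_lcm_l. - eapply Nat.divide_trans. apply IHl; auto. apply Nat.divide_lcm_r. Qed.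
Lemma lcm_list_least (k : nat -> nat) l m : (forall i, In i l -> Nat.divide (k i) m) ->
  Nat.divide (fold_right Nat.lcm 1%nat (map k l)) m.
Proof. induction l; simpl; intros H. - apply Nat.divide_1_l.
  - apply Nat.lcm_least. apply H; auto. apply IHl; auto. Qed.
Lemma lcm_list_pos (k : nat -> nat) l : (forall i, In i l -> (0 < k i)%nat) -> (0 < fold_right Nat.lcm 1%nat (map k l))%nat.
Proof. induction l; simpl; intros H. lia. assert (0 < k a)%nat by auto. assert (0 < fold_right Nat.lcm 1%nat (map k l))%nat by auto.
  destruct (Nat.eq_dec (Nat.lcm (k a) (fold_right Nat.lcm 1%nat (map k l))) 0); [|lia].
  apply Nat.lcm_eq_0 in e. lia. Qed.

Lemma INR_div_exact a b : (0 < b)%nat -> Nat.divide b a -> INR (a / b) = INR a / INR b.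
Proof. intros Hb [c ->]. rewrite Nat.div_mul by lia. rewrite mult_INR. field. apply not_0_INR; lia. Qed.

Lemma sk_INR (k : nat -> nat) m l : (forall j, In j l -> (0 < k j)%nat /\ Nat.divide (k j) m) ->
  INR (fold_right Nat.add 0%nat (map (fun j => (m / k j)%nat) l)) = INR m * fold_right Rplus 0 (map (fun j => / INR (k j)) l).
Proof. induction l; simpl; intros H. ring. rewrite plus_INR, IHl by auto. destruct (H a (or_introl eq_refl)).
  rewrite INR_div_exact by auto. unfold Rdiv. ring. Qed.

Lemma fold_Rplus_app l a : fold_right Rplus 0 (l ++ [a]) = fold_right Rplus 0 l + a.
Proof. induction l; simpl. ring. rewrite IHl. ring. Qed.

Lemma V_cm n k m : (2 <= n)%nat -> (forall i, (i < n)%nat -> (0 < k i)%nat) ->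
  fold_right Rplus 0 (map (fun i => / INR (k i)) (seq 0 n)) = 1 ->
  V k m (n - 1) m = cm n k m.
Proof. intros Hn Hk Hsum. rewrite V_closed. unfold cm.
  set (d := (n - 1)%nat).
  assert (Hnd : n = S d) by (unfold d; lia).
  assert (HK : (0 < lcmk n k)%nat). { apply lcm_list_pos. intros i Hi. apply in_seq in Hi. apply Hk; lia. }
  fold (pf k m n). rewrite Hnd at 2. rewrite pf_S.
  destruct (allk k m d) eqn:Ha.
  - assert (Hdiv : forall j, In j (seq 0 d) -> (0 < k j)%nat /\ Nat.divide (k j) m).
    { intros j Hj. unfold allk in Ha. rewrite forallb_forall in Ha. specialize (Ha j Hj).
      apply Nat.eqb_eq in Ha. apply in_seq in Hj. split. apply Hk; lia. now apply Nat.Lcm0.mod_divide. }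
    pose proof (sk_INR k m (seq 0 d) Hdiv) as Hs. fold (sk k m d) in Hs.
    rewrite Hnd, seq_S, map_app in Hsum. cbn [map] in Hsum. rewrite fold_Rplus_app in Hsum. simpl Nat.add in Hsum.
    assert (Hkd : (0 < k d)%nat) by (apply Hk; lia).
    assert (Hkd' : 0 < INR (k d)) by (apply lt_0_INR; lia).
    assert (Hsm : INR m - INR (sk k m d) = INR m / INR (k d)).
    { rewrite Hs. replace (fold_right Rplus 0 (map (fun j => / INR (k j)) (seq 0 d))) with (1 - / INR (k d)) by lra.
      field. lra. }
    assert (Hle : (sk k m d <= m)%nat).
    { apply INR_le. assert (0 <= INR m / INR (k d)). { unfold Rdiv. apply Rmult_le_pos. apply pos_INR. left; apply Rinv_0_lt_compat; auto. } lra. }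
    assert (Hprod : (k d * (m - sk k m d))%nat = m).
    { apply INR_eq. rewrite mult_INR, minus_INR by auto. rewrite Hsm. field. lra. }
    assert (Hdivd : Nat.divide (k d) m) by (exists (m - sk k m d)%nat; lia).
    assert (Hq : (m / k d)%nat = (m - sk k m d)%nat).
    { rewrite <- Hprod at 1. rewrite Nat.mul_comm, Nat.div_mul; lia. }
    assert (HKm : (m mod lcmk n k)%nat = 0%nat).
    { apply Nat.Lcm0.mod_divide. apply lcm_list_least. intros i Hi. apply in_seq in Hi.
      destruct (Nat.eq_dec i d). subst i; auto. apply Hdiv. apply in_seq. lia. }
    rewrite HKm, Nat.eqb_refl. simpl andb.
    replace (sk k m d <=? m)%nat with true by (symmetry; apply Nat.leb_le; auto).
    rewrite Hq. reflexivity.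
  - simpl andb. destruct (Nat.eqb_spec (m mod lcmk n k) 0) as [E|E]; auto.
    exfalso. unfold allk in Ha. apply Bool.not_true_iff_false in Ha. apply Ha.
    apply forallb_forall. intros j Hj. apply Nat.eqb_eq. apply Nat.Lcm0.mod_divide.
    apply Nat.Lcm0.mod_divide in E. eapply Nat.divide_trans; [|exact E].
    apply lcm_list_div. apply in_seq in Hj. apply in_seq. lia. Qed.

Lemma d_eq f x l l' : l = l' -> derivable_pt_lim f x l -> derivable_pt_lim f x l'.
Proof. intros ->; auto. Qed.
Lemma d_ext f g x l : (forall z, f z = g z) -> derivable_pt_lim f x l -> derivable_pt_lim g x l.
Proof. apply derivable_pt_lim_ext. Qed.
Lemma d_plus f g x lf lg : derivable_pt_lim f x lf -> derivable_pt_lim g x lg ->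
  derivable_pt_lim (fun t => f t + g t) x (lf + lg).
Proof. intros; now apply derivable_pt_lim_plus. Qed.
Lemma d_mult f g x lf lg : derivable_pt_lim f x lf -> derivable_pt_lim g x lg ->
  derivable_pt_lim (fun t => f t * g t) x (lf * g x + f x * lg).
Proof. intros; now apply derivable_pt_lim_mult. Qed.
Lemma d_const c x : derivable_pt_lim (fun _ => c) x 0.
Proof. apply derivable_pt_lim_const. Qed.
Lemma d_id x : derivable_pt_lim (fun t => t) x 1.
Proof. apply derivable_pt_lim_id. Qed.
Lemma d_comp f g x l1 l2 : derivable_pt_lim f x l1 -> derivable_pt_lim g (f x) l2 ->
  derivable_pt_lim (fun t => g (f t)) x (l2 * l1).
Proof. intros; now apply (derivable_pt_lim_comp f g). Qed.
Lemma d_div f g x lf lg : derivable_pt_lim f x lf -> derivable_pt_lim g x lg -> g x <> 0 ->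
  derivable_pt_lim (fun t => f t / g t) x ((lf * g x - lg * f x) / (g x * g x)).
Proof. intros. pose proof (derivable_pt_lim_div f g x lf lg H H0 H1). unfold Rsqr in H2. exact H2. Qed.

Lemma fst_CS f n : fst (CS f n) = fold_right Rplus 0 (map (fun i => fst (f i)) (seq 0 n)).
Proof. unfold CS. induction (seq 0 n); simpl; auto. now rewrite IHl. Qed.
Lemma snd_CS f n : snd (CS f n) = fold_right Rplus 0 (map (fun i => snd (f i)) (seq 0 n)).
Proof. unfold CS. induction (seq 0 n); simpl; auto. now rewrite IHl. Qed.

Lemma d_sum (F F' : nat -> R -> R) l x : (forall i, derivable_pt_lim (F i) x (F' i x)) ->
  derivable_pt_lim (fun t => fold_right Rplus 0 (map (fun i => F i t) l)) x
     (fold_right Rplus 0 (map (fun i => F' i x) l)).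
Proof. intros H. induction l; simpl. apply d_const. apply d_plus; auto. Qed.

Lemma d_powc (c : R) (i : nat) x : derivable_pt_lim (fun t => t ^ S i / INR (S i) * c) x (x ^ i * c).
Proof. eapply d_eq. 2:{ apply (d_mult (fun t => t ^ S i / INR (S i)) (fun _ => c)).
    - apply (d_mult (fun t => t ^ S i) (fun _ => / INR (S i))). apply derivable_pt_lim_pow. apply d_const.
    - apply d_const. }
  simpl pred. field. apply not_0_INR. lia. Qed.

Lemma fst_RtoC_mul r z : fst (Cmul (RtoC r) z) = r * fst z.
Proof. destruct z; unfold Cmul, RtoC; simpl; ring. Qed.
Lemma snd_RtoC_mul r z : snd (Cmul (RtoC r) z) = r * snd z.
Proof. destruct z; unfold Cmul, RtoC; simpl; ring. Qed.

Definition Phi u M t := CS (fun i => Cmul (RtoC (t ^ S i / INR (S i))) (Cpow u (S i))) M.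
Definition Phi' u M t := CS (fun i => Cmul (RtoC (t ^ i)) (Cpow u (S i))) M.

Lemma d_Phi_fst u M x : derivable_pt_lim (fun t => fst (Phi u M t)) x (fst (Phi' u M x)).
Proof. unfold Phi, Phi'. rewrite fst_CS. eapply d_eq.
  2:{ eapply d_ext.
    2:{ apply (d_sum (fun i t => t ^ S i / INR (S i) * fst (Cpow u (S i))) (fun i t => t ^ i * fst (Cpow u (S i)))).
      intros; apply d_powc. }
    intros z. simpl. rewrite fst_CS. f_equal. apply map_ext. intros; now rewrite fst_RtoC_mul. }
  f_equal. apply map_ext. intros; now rewrite fst_RtoC_mul. Qed.
Lemma d_Phi_snd u M x : derivable_pt_lim (fun t => snd (Phi u M t)) x (snd (Phi' u M x)).
Proof. unfold Phi, Phi'. rewrite snd_CS. eapply d_eq.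
  2:{ eapply d_ext.
    2:{ apply (d_sum (fun i t => t ^ S i / INR (S i) * snd (Cpow u (S i))) (fun i t => t ^ i * snd (Cpow u (S i)))).
      intros; apply d_powc. }
    intros z. simpl. rewrite snd_CS. f_equal. apply map_ext. intros; now rewrite snd_RtoC_mul. }
  f_equal. apply map_ext. intros; now rewrite snd_RtoC_mul. Qed.

Definition w u t := Csub Cone (Cmul (RtoC t) u).
Lemma Phi'_geom u M t : Cmul (w u t) (Phi' u M t) = Csub u (Cmul (RtoC (t ^ M)) (Cpow u (S M))).
Proof. unfold Phi', w. induction M.
  - unfold CS; simpl. cring.
  - rewrite CS_back, Cmul_add_r, IHM. change (Cpow u (S (S M))) with (Cmul u (Cpow u (S M))).
    change (t ^ S M) with (t * t ^ M). rewrite RtoC_mul.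
    generalize (Cpow u (S M)) (RtoC (t ^ M)). intros; cring. Qed.

Lemma w_fst u t : fst (w u t) = 1 + t * (- fst u).
Proof. destruct u; unfold w; cunf; ring. Qed.
Lemma w_snd u t : snd (w u t) = 0 + t * (- snd u).
Proof. destruct u; unfold w; cunf; ring. Qed.
Lemma d_lin p s x : derivable_pt_lim (fun t => p + t * s) x s.
Proof. eapply d_eq. 2:{ apply d_plus. apply d_const. apply (d_mult (fun t => t) (fun _ => s)). apply d_id. apply d_const. }
  ring. Qed.

Definition Qf u t := fst (w u t) * fst (w u t) + snd (w u t) * snd (w u t).

Lemma d_Qf u x : derivable_pt_lim (Qf u) x (2 * fst (w u x) * (- fst u) + 2 * snd (w u x) * (- snd u)).
Proof. eapply d_eq. 2:{ eapply d_ext. 2:{ apply d_plus; apply d_mult; apply d_lin. }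
    intros z; unfold Qf; now rewrite !w_fst, !w_snd. }
  rewrite !w_fst, !w_snd. ring. Qed.

Lemma d_fR u x : 0 < Qf u x ->
  derivable_pt_lim (fun t => ln (Cnorm (w u t))) x (fst (Cmul (Copp u) (Cinv (w u x)))).
Proof. intros HQ. eapply d_eq. 2:{ eapply d_ext. 2:{ apply (d_comp (fun t => sqrt (Qf u t)) ln).
      apply (d_comp (Qf u) sqrt). apply d_Qf. apply derivable_pt_lim_sqrt; auto.
      apply derivable_pt_lim_ln. apply sqrt_lt_R0; auto. }
    intros z. reflexivity. }
  pose proof (sqrt_lt_R0 _ HQ). pose proof (sqrt_sqrt _ (Rlt_le _ _ HQ)).
  unfold Qf in *. remember (w u x) as W. destruct W as [f s]. destruct u as [a b].
  unfold Cmul, Copp, Cinv in *. simpl fst in *; simpl snd in *.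
  set (r := sqrt (f * f + s * s)) in *. rewrite <- H0. field. lra. Qed.

Lemma d_fI u x : fst (w u x) <> 0 ->
  derivable_pt_lim (fun t => atan (snd (w u t) / fst (w u t))) x (snd (Cmul (Copp u) (Cinv (w u x)))).
Proof. intros Hf. eapply d_eq. 2:{ apply (d_comp (fun t => snd (w u t) / fst (w u t)) atan).
    apply d_div; auto. eapply d_ext. 2: apply (d_lin 0 (- snd u)). intros; now rewrite w_snd.
    eapply d_ext. 2: apply (d_lin 1 (- fst u)). intros; now rewrite w_fst.
    apply derivable_pt_lim_atan. }
  cbv beta. remember (w u x) as W. destruct W as [f s]. destruct u as [a b].
  unfold Cmul, Copp, Cinv in *. simpl fst in *; simpl snd in *.
  assert (0 < f * f) by (apply Rsqr_pos_lt in Hf; unfold Rsqr in Hf; auto).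
  assert (0 <= s * s) by apply Rle_0_sqr.
  field. split; [nra|auto]. Qed.

Lemma w_0 u : w u 0 = Cone. Proof. unfold w. destruct u; cunf; f_equal; ring. Qed.
Lemma w_1 u : w u 1 = Csub Cone u. Proof. unfold w. destruct u; cunf; f_equal; ring. Qed.
Lemma Phi_0 u M : Phi u M 0 = Czero.
Proof. unfold Phi. unfold CS. apply Csum_map_zero. intros i _. simpl. rewrite Rmult_0_l.
  unfold Rdiv; rewrite Rmult_0_l. apply Cmul_0_l. Qed.
Lemma Phi_1 u M : Phi u M 1 = CS (fun i => Cmul (RtoC (/ INR (S i))) (Cpow u (S i))) M.
Proof. unfold Phi. apply CS_ext. intros. rewrite pow1. unfold Rdiv; rewrite Rmult_1_l. reflexivity. Qed.
Lemma Cnorm_Cone : Cnorm Cone = 1.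
Proof. unfold Cnorm, Cone; simpl. replace (1*1+0*0) with 1 by ring. apply sqrt_1. Qed.

Lemma log_tail u q M : Cnorm u <= q -> q < 1 ->
  Cnorm (Cadd (CLog (Csub Cone u)) (CS (fun i => Cmul (RtoC (/ INR (S i))) (Cpow u (S i))) M))
  <= 2 * (q ^ S M / (1 - q)).
Proof. intros Hu Hq.
  assert (Ha : Rabs (fst u) <= q) by (eapply Rle_trans; [apply Cnorm_fst|auto]).
  assert (Hq0 : 0 <= q) by (eapply Rle_trans; [apply Cnorm_nonneg|eauto]).
  assert (Hf : forall c, 0 <= c <= 1 -> 1 - q <= fst (w u c)).
  { intros c Hc. rewrite w_fst. assert (Rabs (c * fst u) <= q).
    { rewrite Rabs_mult, Rabs_right by lra. apply Rle_trans with (1 * Rabs (fst u)); [|lra].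
      apply Rmult_le_compat_r; [apply Rabs_pos|lra]. }
    pose proof (Rle_abs (c * fst u)) as H0. replace (c * - fst u) with (- (c * fst u)) by ring. lra. }
  assert (HQ : forall c, 0 <= c <= 1 -> 0 < Qf u c).
  { intros c Hc. unfold Qf. pose proof (Hf c Hc). pose proof (Rle_0_sqr (snd (w u c))). unfold Rsqr in H0. nra. }
  set (D := fun c => Cadd (Cmul (Copp u) (Cinv (w u c))) (Phi' u M c)).
  assert (HD : forall c, 0 <= c <= 1 -> Cnorm (D c) <= q ^ S M / (1 - q)).
  { intros c Hc. assert (Hw : w u c <> Czero).
    { intro E1. pose proof (Hf c Hc). rewrite E1 in H. simpl in H. lra. }
    assert (E1 : Cmul (w u c) (D c) = Copp (Cmul (RtoC (c ^ M)) (Cpow u (S M)))).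
    { unfold D. rewrite Cmul_add_r, Phi'_geom.
      replace (Cmul (w u c) (Cmul (Copp u) (Cinv (w u c)))) with (Cmul (Copp u) (Cmul (w u c) (Cinv (w u c)))) by
        (generalize (Cinv (w u c)); intros; cring).
      rewrite Cmul_inv_r by auto. generalize (Cmul (RtoC (c ^ M)) (Cpow u (S M))). intros; cring. }
    assert (E2 : Cnorm (w u c) * Cnorm (D c) <= q ^ S M).
    { rewrite <- Cnorm_mul, E1, Cnorm_opp, Cnorm_mul, Cnorm_RtoC, Cnorm_pow.
      rewrite <- RPow_abs, Rabs_right by lra.
      apply Rle_trans with (1 * q ^ S M); [|lra]. apply Rmult_le_compat.
      apply pow_le; lra. apply pow_le, Cnorm_nonneg.
      replace 1 with (1 ^ M) by apply pow1. apply pow_incr; lra. apply pow_incr; split; auto; apply Cnorm_nonneg. }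
    assert (E3 : 1 - q <= Cnorm (w u c)).
    { eapply Rle_trans. apply (Hf c Hc). eapply Rle_trans. apply Rle_abs. apply Cnorm_fst. }
    apply Rmult_le_reg_l with (1 - q). lra. 
    replace ((1 - q) * (q ^ S M / (1 - q))) with (q ^ S M) by (field; lra).
    eapply Rle_trans; [|exact E2]. apply Rmult_le_compat_r; auto. apply Cnorm_nonneg. }
  assert (Hint : forall c, Rmin 0 1 <= c <= Rmax 0 1 -> 0 <= c <= 1).
  { intros c. rewrite Rmin_left, Rmax_right by lra. auto. }
  destruct (MVT_abs (fun t => ln (Cnorm (w u t)) + fst (Phi u M t)) (fun c => fst (D c)) 0 1) as [c1 [Hc1 Hc1']].
  { intros c Hc. apply Hint in Hc. apply d_plus. apply d_fR; auto. apply d_Phi_fst. }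
  destruct (MVT_abs (fun t => atan (snd (w u t) / fst (w u t)) + snd (Phi u M t)) (fun c => snd (D c)) 0 1) as [c2 [Hc2 Hc2']].
  { intros c Hc. apply Hint in Hc. apply d_plus. apply d_fI; auto. pose proof (Hf c Hc); lra. apply d_Phi_snd. }
  apply Hint in Hc1'. apply Hint in Hc2'.
  assert (A1 : Rabs (ln (Cnorm (w u 1)) + fst (Phi u M 1) - (ln (Cnorm (w u 0)) + fst (Phi u M 0))) <= q ^ S M / (1 - q)).
  { cbv beta in Hc1. rewrite Hc1. replace (Rabs (1 - 0)) with 1 by (rewrite Rminus_0_r; symmetry; apply Rabs_R1).
    rewrite Rmult_1_r. eapply Rle_trans. apply Cnorm_fst. apply HD; auto. }
  assert (A2 : Rabs (atan (snd (w u 1) / fst (w u 1)) + snd (Phi u M 1) - (atan (snd (w u 0) / fst (w u 0)) + snd (Phi u M 0))) <= q ^ S M / (1 - q)).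
  { cbv beta in Hc2. rewrite Hc2. replace (Rabs (1 - 0)) with 1 by (rewrite Rminus_0_r; symmetry; apply Rabs_R1).
    rewrite Rmult_1_r. eapply Rle_trans. apply Cnorm_snd. apply HD; auto. }
  assert (Hf1 : 0 < fst (w u 1)) by (pose proof (Hf 1 ltac:(lra)); lra).
  rewrite w_0, Phi_0, Cnorm_Cone, ln_1 in A1. rewrite w_0, Phi_0 in A2.
  change (snd Cone / fst Cone) with (0 / 1) in A2. change (fst Czero) with 0 in A1. change (snd Czero) with 0 in A2.
  replace (0 / 1) with 0 in A2 by field. rewrite atan_0 in A2.
  rewrite Rplus_0_r, Rminus_0_r in A1, A2.
  assert (E1 : fst (Cadd (CLog (Csub Cone u)) (CS (fun i => Cmul (RtoC (/ INR (S i))) (Cpow u (S i))) M))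
     = ln (Cnorm (w u 1)) + fst (Phi u M 1)).
  { rewrite w_1, Phi_1. reflexivity. }
  assert (E2 : snd (Cadd (CLog (Csub Cone u)) (CS (fun i => Cmul (RtoC (/ INR (S i))) (Cpow u (S i))) M))
     = atan (snd (w u 1) / fst (w u 1)) + snd (Phi u M 1)).
  { rewrite Phi_1. unfold Cadd at 1. unfold snd at 1. f_equal. rewrite w_1 in *.
    unfold CLog, snd at 1, Arg. destruct (Rlt_dec 0 (fst (Csub Cone u))); [reflexivity|lra]. }
  eapply Rle_trans. apply Cnorm_le_sum. rewrite E1, E2. lra. Qed.

Lemma Cnorm_tp eps N a j : 0 < eps j -> Cnorm (torus_pt eps N a j) = eps j.
Proof. intros. unfold torus_pt. rewrite Cnorm_mul, Cnorm_RtoC. fold (E (2 * PI * INR (a j) / INR N)).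
  rewrite Cnorm_E, Rabs_right by lra. ring. Qed.
Lemma tp_neq0 eps N a j : 0 < eps j -> torus_pt eps N a j <> Czero.
Proof. intros H E1. pose proof (Cnorm_tp eps N a j H). rewrite E1, Cnorm_Czero in H0. lra. Qed.

Lemma Cprod_neq0 (x : nat -> CC) l : (forall j, In j l -> x j <> Czero) -> Cprod (map x l) <> Czero.
Proof. induction l; simpl; intros H. unfold Cone; intro E1; injection E1; lra.
  apply Cmul_neq0; auto. Qed.
Lemma Cinv_prod (x : nat -> CC) l : (forall j, In j l -> x j <> Czero) ->
  Cinv (Cprod (map x l)) = Cprod (map (fun j => Cinv (x j)) l).
Proof. induction l; simpl; intros H. - unfold Cinv, Cone; simpl. f_equal; field.
  - rewrite Cinv_mul, IHl; auto. apply Cprod_neq0; auto. Qed.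
Lemma Cpow_prod (f : nat -> CC) l m : Cpow (Cprod (map f l)) m = Cprod (map (fun j => Cpow (f j) m) l).
Proof. induction l; simpl. apply Cpow_1. rewrite Cpow_mul, IHl. reflexivity. Qed.

Lemma upow_G n k x xi m : (forall j, (j < n - 1)%nat -> x j <> Czero) -> (0 < lcmk n k)%nat ->
  Cpow (Cmul xi (Pratio n k x)) m =
  Cmul (Cmul (Cpow xi m) (RtoC ((/ INR (lcmk n k)) ^ m))) (G k m (n - 1) m x).
Proof. intros Hx HK. unfold Pratio, Cdiv, G, Id.
  assert (HK' : INR (lcmk n k) <> 0) by (apply not_0_INR; lia).
  rewrite Cinv_mul, Cinv_RtoC, Cinv_prod; auto.
  2:{ intros j Hj; apply in_seq in Hj; apply Hx; lia. }
  2:{ apply RtoC_neq0; auto. }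
  2:{ apply Cprod_neq0. intros j Hj; apply in_seq in Hj; apply Hx; lia. }
  rewrite !Cpow_mul, Cpow_RtoC, Cpow_prod. unfold Ppoly. fold (Sd k (n - 1) x).
  generalize (Cpow xi m) (Cpow (Cadd (Sd k (n - 1) x) Cone) m) (RtoC ((/ INR (lcmk n k)) ^ m))
    (Cprod (map (fun j => Cpow (Cinv (x j)) m) (seq 0 (n - 1)))). intros; cring. Qed.

Definition ksum (n : nat) (k : nat -> nat) := fold_right Nat.add 0%nat (map k (seq 0 n)).
Lemma ksum_ge n k j : (j < n)%nat -> (k j <= ksum n k)%nat.
Proof. unfold ksum. intros H. assert (In j (seq 0 n)) by (apply in_seq; lia). clear H.
  induction (seq 0 n); simpl in *. contradiction. destruct H0 as [H0|H0]. subst; lia. specialize (IHl H0); lia. Qed.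

Lemma riemann_upow n k eps xi m N : (2 <= n)%nat -> (forall i, (i < n)%nat -> (0 < k i)%nat) ->
  fold_right Rplus 0 (map (fun i => / INR (k i)) (seq 0 n)) = 1 ->
  (forall j, (j < n - 1)%nat -> 0 < eps j) ->
  (m * (1 + ksum n k) < N)%nat ->
  torus_riemann_sum (n - 1) eps (fun x => Cpow (Cmul xi (Pratio n k x)) m) N =
  Cmul (RtoC (cm n k m / INR (lcmk n k) ^ m)) (Cpow xi m).
Proof. intros Hn Hk Hs He HN.
  assert (HK : (0 < lcmk n k)%nat). { apply lcm_list_pos. intros i Hi. apply in_seq in Hi. apply Hk; lia. }
  unfold torus_riemann_sum.
  rewrite (gridsum_ext _ _ _ (fun a => Cmul (Cmul (Cpow xi m) (RtoC ((/ INR (lcmk n k)) ^ m)))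
     (G k m (n - 1) m (torus_pt eps N a)))).
  2:{ intros a. apply upow_G; auto. intros j Hj. apply tp_neq0; auto. }
  assert (HN1 : (0 < N)%nat) by nia.
  assert (HN2 : (m < N)%nat) by nia.
  assert (HN3 : forall j, (j < n - 1)%nat -> (k j * m < N)%nat).
  { intros j Hj. pose proof (ksum_ge n k j ltac:(lia)). nia. }
  rewrite gridsum_scal, claim; auto.
  2:{ intros j Hj. apply Hk; lia. }
  rewrite V_cm by auto.
  assert (HN0 : INR N <> 0) by (apply not_0_INR; lia).
  rewrite pow_inv.
  rewrite !RtoC_mul. unfold Rdiv. rewrite RtoC_mul.
  replace (RtoC (/ INR N ^ (n - 1))) with (Cinv (RtoC (INR N ^ (n - 1)))).
  2:{ rewrite Cinv_RtoC. reflexivity. apply pow_nonzero; auto. }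
  assert (RtoC (INR N ^ (n - 1)) <> Czero) by (apply RtoC_neq0, pow_nonzero; auto).
  generalize (Cpow xi m) (RtoC (cm n k m)) (RtoC (/ INR (lcmk n k) ^ m)) .
  intros. rewrite (Cmul_comm (Cmul _ _) (Cmul (RtoC (INR N ^ (n - 1))) _)).
  rewrite !Cmul_assoc, Cmul_inv_l, Cmul_1_l by auto.
  generalize (RtoC (INR N ^ (n - 1))). intros; cring. Qed.

Lemma tail_bound (a : nat -> CC) q : 0 <= q < 1 -> (forall m, (1 <= m)%nat -> Cnorm (a m) <= q ^ m) ->
  forall len s, (1 <= s)%nat -> Cnorm (Csum (map a (seq s len))) <= q ^ s / (1 - q).
Proof. intros Hq Ha. induction len; intros s Hs; simpl.
  - rewrite Cnorm_Czero. apply Rmult_le_pos. apply pow_le; lra. left; apply Rinv_0_lt_compat; lra.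
  - eapply Rle_trans. apply Cnorm_triangle. pose proof (IHlen (S s) ltac:(lia)). pose proof (Ha s Hs).
    simpl in H. apply Rle_trans with (q ^ s + q * q ^ s / (1 - q)). lra.
    right. field. lra. Qed.

Lemma partial_diff (a : nat -> CC) n1 n2 : (n1 <= n2)%nat ->
  Csum (map a (seq 1 n2)) = Cadd (Csum (map a (seq 1 n1))) (Csum (map a (seq (S n1) (n2 - n1)))).
Proof. intros H. replace n2 with (n1 + (n2 - n1))%nat at 1 by lia. rewrite seq_app, map_app, Csum_app. reflexivity. Qed.

Lemma Cnorm_sub_comm z w : Cnorm (Csub z w) = Cnorm (Csub w z).
Proof. replace (Csub z w) with (Copp (Csub w z)) by cring. apply Cnorm_opp. Qed.

Lemma series_conv (a : nat -> CC) q : 0 <= q < 1 -> (forall m, (1 <= m)%nat -> Cnorm (a m) <= q ^ m) ->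
  exists S, Cseries1 a S.
Proof. intros Hq Ha. set (P := fun N => Csum (map a (seq 1 N))).
  assert (HC : forall e, 0 < e -> exists N0, forall n1 n2, (N0 <= n1)%nat -> (N0 <= n2)%nat -> Cnorm (Csub (P n1) (P n2)) < e).
  { intros e He. destruct (pow_lt_1_zero q ltac:(rewrite Rabs_right; lra) (e * (1 - q)) ltac:(apply Rmult_lt_0_compat; lra)) as [N0 HN0].
    exists N0. intros n1 n2 H1 H2.
    assert (forall x y, (N0 <= x)%nat -> (x <= y)%nat -> Cnorm (Csub (P y) (P x)) < e).
    { intros x y Hx Hy. unfold P. rewrite (partial_diff a x y Hy).
      replace (Csub (Cadd (Csum (map a (seq 1 x))) (Csum (map a (seq (S x) (y - x))))) (Csum (map a (seq 1 x))))
        with (Csum (map a (seq (S x) (y - x)))) by (generalize (Csum (map a (seq 1 x))) (Csum (map a (seq (S x) (y - x)))); intros; cring).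
      eapply Rle_lt_trans. apply tail_bound; [exact Hq|exact Ha|lia].
      specialize (HN0 (S x) ltac:(lia)). rewrite Rabs_right in HN0 by (apply Rle_ge, pow_le; lra).
      apply Rmult_lt_reg_r with (1 - q). lra. unfold Rdiv. rewrite Rmult_assoc, Rinv_l, Rmult_1_r by lra. auto. }
    destruct (Nat.le_ge_cases n1 n2). rewrite Cnorm_sub_comm. apply H; auto. apply H; auto. }
  destruct (R_complete (fun N => fst (P N))) as [lR HR].
  { intros e He. destruct (HC e He) as [N0 HN0]. exists N0. intros n1 n2 H1 H2. unfold Rdist.
    eapply Rle_lt_trans; [|apply (HN0 n1 n2 H1 H2)]. eapply Rle_trans; [|apply Cnorm_fst].
    right. destruct (P n1), (P n2). unfold Csub, Cadd, Copp; simpl. f_equal. }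
  destruct (R_complete (fun N => snd (P N))) as [lI HI].
  { intros e He. destruct (HC e He) as [N0 HN0]. exists N0. intros n1 n2 H1 H2. unfold Rdist.
    eapply Rle_lt_trans; [|apply (HN0 n1 n2 H1 H2)]. eapply Rle_trans; [|apply Cnorm_snd].
    right. destruct (P n1), (P n2). unfold Csub, Cadd, Copp; simpl. f_equal. }
  exists (lR, lI). intros e He.
  destruct (HR (e/2) ltac:(lra)) as [N1 HN1]. destruct (HI (e/2) ltac:(lra)) as [N2 HN2].
  exists (max N1 N2). intros N HN. fold (P N).
  eapply Rle_lt_trans. apply Cnorm_le_sum.
  specialize (HN1 N ltac:(lia)). specialize (HN2 N ltac:(lia)). unfold Rdist in *.
  destruct (P N). unfold Csub, Cadd, Copp; simpl in *. unfold Rminus in *. lra. Qed.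

Lemma rs_add d eps f g N : torus_riemann_sum d eps (fun x => Cadd (f x) (g x)) N =
  Cadd (torus_riemann_sum d eps f N) (torus_riemann_sum d eps g N).
Proof. unfold torus_riemann_sum. rewrite gridsum_add. apply Cmul_add_r. Qed.
Lemma rs_scal d eps c f N : torus_riemann_sum d eps (fun x => Cmul c (f x)) N = Cmul c (torus_riemann_sum d eps f N).
Proof. unfold torus_riemann_sum. rewrite gridsum_scal. generalize (gridsum d N (fun a => f (torus_pt eps N a))). intros; cring. Qed.
Lemma rs_opp d eps f N : torus_riemann_sum d eps (fun x => Copp (f x)) N = Copp (torus_riemann_sum d eps f N).
Proof. unfold torus_riemann_sum. rewrite (gridsum_ext _ _ _ (fun a => Cmul (Copp Cone) (f (torus_pt eps N a)))).
  rewrite gridsum_scal. generalize (gridsum d N (fun a => f (torus_pt eps N a))). intros; cring.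
  intros; cring. Qed.
Lemma rs_const d eps c N : (0 < N)%nat -> torus_riemann_sum d eps (fun _ => c) N = c.
Proof. intros. unfold torus_riemann_sum. rewrite gridsum_const, Cmul_assoc, <- RtoC_mul, Rinv_l. apply Cmul_1_l.
  apply pow_nonzero, not_0_INR; lia. Qed.
Lemma rs_CS d eps (F : nat -> (nat -> CC) -> CC) M N :
  torus_riemann_sum d eps (fun x => CS (fun i => F i x) M) N = CS (fun i => torus_riemann_sum d eps (F i) N) M.
Proof. unfold torus_riemann_sum, CS. rewrite (gridsum_csum d N (fun i a => F i (torus_pt eps N a))).
  rewrite <- Csum_map_scal. reflexivity. Qed.
Lemma rs_bound d eps g N B : (0 < N)%nat -> (forall a, Cnorm (g (torus_pt eps N a)) <= B) ->
  Cnorm (torus_riemann_sum d eps g N) <= B.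
Proof. intros HN H. unfold torus_riemann_sum. rewrite Cnorm_mul, Cnorm_RtoC.
  assert (0 < INR N ^ d) by (apply pow_lt, lt_0_INR; lia).
  rewrite Rabs_right by (apply Rle_ge; left; apply Rinv_0_lt_compat; auto).
  apply Rmult_le_reg_l with (INR N ^ d); auto. rewrite <- Rmult_assoc, Rinv_r, Rmult_1_l by lra.
  apply gridsum_bound; auto. Qed.

Lemma Cdiv_RtoC z r : Cdiv z (RtoC r) = Cmul z (RtoC (/ r)).
Proof. destruct z; unfold Cdiv, Cinv, Cmul, RtoC; simpl. destruct (Req_dec r 0).
  - subst. rewrite Rinv_0. f_equal; unfold Rdiv; ring_simplify; try rewrite Rinv_0; ring.
  - f_equal; field; auto. Qed.

Lemma hg_aux (L X Y : CC) : Cadd L X = Cadd L (Cadd (Cadd X Y) (Copp Y)). Proof. cring. Qed.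
Lemma aux2 L R P Sg : Csub (Cadd L (Cadd R (Copp P))) (Cadd L (Copp Sg)) = Cadd R (Copp (Csub P Sg)).
Proof. cring. Qed.
Ltac cring' := intros; cdes; unfold Csub, Cdiv, Cadd, Cmul, Copp, RtoC, Czero, Cone; simpl; f_equal; ring.

Section Main.
Variables (n : nat) (k : nat -> nat) (eps : nat -> R) (psi : CC) (s : R) (L : CC).
Hypothesis Hn : (2 <= n)%nat.
Hypothesis Hk : forall i, (i < n)%nat -> (0 < k i)%nat.
Hypothesis Hsum : fold_right Rplus 0 (map (fun i => / INR (k i)) (seq 0 n)) = 1.
Hypothesis Heps : forall j, (j < n - 1)%nat -> 0 < eps j.
Hypothesis Hpsi : psi <> Czero.
Hypothesis Hlub : is_lub (fun r => exists x : nat -> CC,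
                  (forall j, (j < n - 1)%nat -> Cnorm (x j) = eps j) /\
                  r = Cnorm (Pratio n k x)) s.
Hypothesis Hs : Cnorm (Cinv psi) * s < 1.
Hypothesis HL : Cexp L = psi.

Let xi := Cinv psi.
Let K := lcmk n k.
Let q := Cnorm xi * s.
Let u := fun x => Cmul xi (Pratio n k x).
Let a := fun m => Cdiv (Cmul (RtoC (cm n k m)) (Cpow xi m)) (RtoC (INR m * INR K ^ m)).

Lemma HK : (0 < K)%nat.
Proof. apply lcm_list_pos. intros i Hi. apply in_seq in Hi. apply Hk; lia. Qed.

Lemma s_nonneg : 0 <= s.
Proof. destruct Hlub as [Hub _]. eapply Rle_trans; [|apply Hub].
  2:{ exists (torus_pt eps 1 (fun _ => 0%nat)). split. intros; apply Cnorm_tp; auto. reflexivity. }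
  apply Cnorm_nonneg. Qed.
Lemma q_bounds : 0 <= q < 1.
Proof. split. apply Rmult_le_pos. apply Cnorm_nonneg. apply s_nonneg. exact Hs. Qed.

Lemma u_bound N b : Cnorm (u (torus_pt eps N b)) <= q.
Proof. unfold u, q. rewrite Cnorm_mul. apply Rmult_le_compat_l. apply Cnorm_nonneg.
  destruct Hlub as [Hub _]. apply Hub. exists (torus_pt eps N b). split; auto.
  intros; apply Cnorm_tp; auto. Qed.

Lemma rs_u m N : (m * (1 + ksum n k) < N)%nat ->
  torus_riemann_sum (n - 1) eps (fun x => Cpow (u x) m) N = Cmul (RtoC (cm n k m / INR K ^ m)) (Cpow xi m).
Proof. intros. unfold u. apply riemann_upow; auto. Qed.

Lemma a_eq m : (1 <= m)%nat -> forall N, (m * (1 + ksum n k) < N)%nat ->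
  a m = Cmul (RtoC (/ INR m)) (torus_riemann_sum (n - 1) eps (fun x => Cpow (u x) m) N).
Proof. intros Hm N HN. rewrite rs_u by auto. unfold a. rewrite Cdiv_RtoC.
  assert (H : INR m <> 0) by (apply not_0_INR; lia). assert (H0 : INR K ^ m <> 0) by (apply pow_nonzero, not_0_INR; pose proof HK; lia).
  revert H H0. generalize (Cpow xi m) (cm n k m) (INR K ^ m) (INR m). clear. intros X c P r H H0.
  rewrite Rinv_mult. unfold Rdiv. rewrite !RtoC_mul. cring'. Qed.

Lemma a_bound m : (1 <= m)%nat -> Cnorm (a m) <= q ^ m.
Proof. intros Hm. rewrite (a_eq m Hm (S (m * (1 + ksum n k)))) by lia.
  rewrite Cnorm_mul, Cnorm_RtoC. pose proof q_bounds.
  assert (1 <= INR m) by (apply (le_INR 1); lia).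
  rewrite Rabs_right by (apply Rle_ge; left; apply Rinv_0_lt_compat; lra).
  apply Rle_trans with (1 * q ^ m); [|lra]. apply Rmult_le_compat.
  left; apply Rinv_0_lt_compat; lra. apply Cnorm_nonneg.
  rewrite <- Rinv_1. apply Rinv_le_contravar; lra.
  apply rs_bound. lia. intros b. rewrite Cnorm_pow. apply pow_incr. split. apply Cnorm_nonneg. apply u_bound. Qed.

Lemma S_exists : exists S, Cseries1 a S.
Proof. apply (series_conv a q q_bounds a_bound). Qed.

Lemma integral_conv Sg : Cseries1 a Sg ->
  torus_integral_is (n - 1) eps (fun x => Cadd L (CLog (Csub Cone (u x)))) (Cadd L (Copp Sg)).
Proof. intros HS e He. pose proof q_bounds as Hq.
  destruct (HS (e/2) ltac:(lra)) as [M1 HM1].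
  destruct (pow_lt_1_zero q ltac:(rewrite Rabs_right; lra) (e * (1 - q) / 4)) as [M2 HM2].
  { apply Rmult_lt_0_compat. apply Rmult_lt_0_compat; lra. lra. }
  set (M := max M1 M2).
  exists (S (M * (1 + ksum n k))). intros N HN.
  set (T := fun x => Cadd (CLog (Csub Cone (u x))) (CS (fun i => Cmul (RtoC (/ INR (S i))) (Cpow (u x) (S i))) M)).
  assert (Hg0 : torus_riemann_sum (n - 1) eps (fun x => Cadd L (CLog (Csub Cone (u x)))) N =
     torus_riemann_sum (n - 1) eps (fun x => Cadd L (Cadd (T x) (Copp (CS (fun i => Cmul (RtoC (/ INR (S i))) (Cpow (u x) (S i))) M)))) N).
  { unfold torus_riemann_sum. f_equal. apply gridsum_ext. intro b. unfold T.
    apply hg_aux. }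
  assert (Hg : torus_riemann_sum (n - 1) eps (fun x => Cadd L (CLog (Csub Cone (u x)))) N =
     Cadd L (Cadd (torus_riemann_sum (n - 1) eps T N)
        (Copp (CS (fun i => Cmul (RtoC (/ INR (S i))) (torus_riemann_sum (n - 1) eps (fun x => Cpow (u x) (S i)) N)) M)))).
  { rewrite Hg0, rs_add, rs_const, rs_add, rs_opp, rs_CS by lia. do 3 f_equal. apply CS_ext. intros; apply rs_scal. }
  assert (HP : CS (fun i => Cmul (RtoC (/ INR (S i))) (torus_riemann_sum (n - 1) eps (fun x => Cpow (u x) (S i)) N)) M
     = Csum (map a (seq 1 M))).
  { unfold CS. rewrite <- seq_shift, map_map. apply Csum_map_ext_in. intros i Hi. apply in_seq in Hi.
    symmetry. apply a_eq. lia. apply Nat.le_lt_trans with (M * (1 + ksum n k))%nat; [apply Nat.mul_le_mono_r; lia | lia]. }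
  rewrite Hg, HP.
  replace (Csub (Cadd L (Cadd (torus_riemann_sum (n - 1) eps T N) (Copp (Csum (map a (seq 1 M)))))) (Cadd L (Copp Sg)))
    with (Cadd (torus_riemann_sum (n - 1) eps T N) (Copp (Csub (Csum (map a (seq 1 M))) Sg)))
    by (symmetry; apply aux2).
  eapply Rle_lt_trans. apply Cnorm_triangle. rewrite Cnorm_opp.
  assert (H1 : Cnorm (torus_riemann_sum (n - 1) eps T N) <= 2 * (q ^ S M / (1 - q))).
  { apply rs_bound. lia. intros b. unfold T. apply log_tail. apply u_bound. lra. }
  specialize (HM1 M ltac:(lia)). specialize (HM2 (S M) ltac:(lia)).
  rewrite Rabs_right in HM2 by (apply Rle_ge, pow_le; lra).
  assert (2 * (q ^ S M / (1 - q)) < e / 2).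
  { apply Rmult_lt_reg_r with (1 - q). lra. unfold Rdiv. 
    replace (2 * (q ^ S M * / (1 - q)) * (1 - q)) with (2 * q ^ S M) by (field; lra). lra. }
  lra. Qed.

End Main.

Lemma block_sum (a : nat -> CC) K J : (0 < K)%nat -> (forall m, (m mod K <> 0)%nat -> a m = Czero) ->
  Csum (map a (seq 1 (K * J))) = Csum (map (fun j => a (K * j)%nat) (seq 1 J)).
Proof. intros HK Ha. induction J.
  - rewrite Nat.mul_0_r. reflexivity.
  - replace (K * S J)%nat with (K * J + K)%nat by lia. rewrite seq_app, map_app, Csum_app, IHJ.
    rewrite seq_S, map_app, Csum_app. f_equal.
    replace K with (S (K - 1)) at 2 by lia. rewrite seq_S, map_app, Csum_app.
    rewrite Csum_map_zero. simpl. rewrite Cadd_0_l, Cadd_0_r. rewrite Cadd_0_r. f_equal. nia.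
    intros m Hm. apply in_seq in Hm. apply Ha. intro E1.
    assert (m = K * J + (m - K * J))%nat by lia. rewrite H, Nat.mul_comm, Nat.add_comm, Nat.Div0.mod_add in E1.
    rewrite Nat.mod_small in E1 by lia. lia. Qed.

Lemma series_sub (a : nat -> CC) K S : (0 < K)%nat -> (forall m, (m mod K <> 0)%nat -> a m = Czero) ->
  Cseries1 a S -> Cseries1 (fun j => Cmul (RtoC (INR K)) (a (K * j)%nat)) (Cmul (RtoC (INR K)) S).
Proof. intros HK Ha HS e He.
  assert (HK' : 0 < INR K) by (apply lt_0_INR; lia).
  destruct (HS (e / INR K) ltac:(apply Rdiv_lt_0_compat; auto)) as [N0 HN0].
  exists N0. intros J HJ. rewrite Csum_map_scal, <- block_sum by auto.
  specialize (HN0 (K * J)%nat ltac:(nia)).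
  replace (Csub (Cmul (RtoC (INR K)) (Csum (map a (seq 1 (K * J))))) (Cmul (RtoC (INR K)) S))
    with (Cmul (RtoC (INR K)) (Csub (Csum (map a (seq 1 (K * J)))) S))
    by (generalize (Csum (map a (seq 1 (K * J)))); intros; cring).
  rewrite Cnorm_mul, Cnorm_RtoC, Rabs_right by lra.
  apply Rmult_lt_reg_l with (/ INR K). apply Rinv_0_lt_compat; auto.
  rewrite <- Rmult_assoc, Rinv_l, Rmult_1_l by lra. unfold Rdiv in HN0. lra. Qed.

Lemma cm_dm n k j : (forall i, (i < n)%nat -> (0 < k i)%nat) -> cm n k (lcmk n k * j) = dm n k j.
Proof. intros Hk. unfold cm, dm, wt.
  assert (HK : (0 < lcmk n k)%nat). { apply lcm_list_pos. intros i Hi. apply in_seq in Hi. apply Hk; lia. }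
  replace ((lcmk n k * j) mod lcmk n k)%nat with 0%nat.
  2:{ rewrite Nat.mul_comm. symmetry. apply Nat.Div0.mod_mul. }
  simpl. f_equal. f_equal. apply map_ext_in. intros i Hi.
  destruct (lcm_list_div k (seq 0 n) i Hi) as [z Hz]. fold (lcmk n k) in Hz.
  apply in_seq in Hi. assert (0 < k i)%nat by (apply Hk; lia).
  rewrite Hz. replace (z * k i * j)%nat with (z * j * k i)%nat by ring.
  rewrite !Nat.div_mul by lia. reflexivity. Qed.

Lemma Cseries1_ext (a b : nat -> CC) S : (forall m, (1 <= m)%nat -> a m = b m) -> Cseries1 a S -> Cseries1 b S.
Proof. intros H HS e He. destruct (HS e He) as [N0 HN0]. exists N0. intros N HN.
  rewrite <- (Csum_map_ext_in a b). auto. intros m Hm. apply in_seq in Hm. apply H; lia. Qed.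

Lemma Mt_eq L psi Sg : Cexp L = psi -> Cexp (Copp (Cadd L (Copp Sg))) = Cmul (Cinv psi) (Cexp Sg).
Proof. intros HL. replace (Copp (Cadd L (Copp Sg))) with (Cadd (Copp L) Sg) by cring.
  rewrite Cexp_add, Cexp_opp, HL. reflexivity. Qed.

Lemma b_eq n k xi j : (forall i, (i < n)%nat -> (0 < k i)%nat) -> (1 <= j)%nat ->
  Cdiv (Cmul (RtoC (dm n k j)) (Cpow (Cdiv (Cpow xi (lcmk n k)) (RtoC (INR (lcmk n k) ^ lcmk n k))) j)) (RtoC (INR j))
  = Cmul (RtoC (INR (lcmk n k))) (Cdiv (Cmul (RtoC (cm n k (lcmk n k * j))) (Cpow xi (lcmk n k * j)))
        (RtoC (INR (lcmk n k * j) * INR (lcmk n k) ^ (lcmk n k * j)))).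
Proof. intros Hk Hj. rewrite cm_dm by auto.
  assert (HK : (0 < lcmk n k)%nat). { apply lcm_list_pos. intros i Hi. apply in_seq in Hi. apply Hk; lia. }
  rewrite !Cdiv_RtoC, Cpow_mul, Cpow_pow, Cpow_RtoC, mult_INR, pow_mult.
  assert (H1 : INR (lcmk n k) <> 0) by (apply not_0_INR; lia).
  assert (H2 : INR j <> 0) by (apply not_0_INR; lia).
  assert (H3 : INR (lcmk n k) ^ lcmk n k <> 0) by (apply pow_nonzero; auto).
  revert H1 H2 H3. generalize (Cpow xi (lcmk n k * j)) (dm n k j) (INR (lcmk n k)) (INR j) (INR (lcmk n k) ^ lcmk n k).
  intros X d c r P H1 H2 H3. rewrite pow_inv.
  assert (P ^ j <> 0) by (apply pow_nonzero; auto).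
  destruct X. unfold Cmul, RtoC; simpl. f_equal; field; auto. Qed.

Theorem mainTheorem3 (n : nat) (k : nat -> nat) (eps : nat -> R) (psi : CC) :
  (2 <= n)%nat ->
  (forall i, (i < n)%nat -> (0 < k i)%nat) ->
  fold_right Rplus 0 (map (fun i => / INR (k i)) (seq 0 n)) = 1 ->
  (forall j, (j < n - 1)%nat -> 0 < eps j) ->
  psi <> Czero ->
  let K := lcmk n k in
  let xi := Cinv psi in
  (* |xi| * sup_{C_eps} |P / (k x_1 ... x_{n-1})| < 1 *)
  (exists s : R,
      is_lub (fun r => exists x : nat -> CC,
                  (forall j, (j < n - 1)%nat -> Cnorm (x j) = eps j) /\
                  r = Cnorm (Pratio n k x)) s
      /\ Cnorm xi * s < 1) ->
  (* for any branch L of log psi *)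
  forall L : CC, Cexp L = psi ->
  exists A : CC,
    torus_integral_is (n - 1) eps
      (fun x => Cadd L (CLog (Csub Cone (Cmul xi (Pratio n k x))))) A /\
    let Mt := Cexp (Copp A) in
    (exists S : CC,
        Cseries1 (fun m => Cdiv (Cmul (RtoC (cm n k m)) (Cpow xi m))
                                (RtoC (INR m * INR K ^ m))) S
        /\ Mt = Cmul xi (Cexp S)) /\
    (let z := Cdiv (Cpow xi K) (RtoC (INR K ^ K)) in
     exists S' : CC,
        Cseries1 (fun m => Cdiv (Cmul (RtoC (dm n k m)) (Cpow z m)) (RtoC (INR m))) S'
        /\ Cdiv (Cpow Mt K) (RtoC (INR K ^ K)) = Cmul z (Cexp S')).
Proof.
  intros Hn Hk Hsum Heps Hpsi K xi [s [Hlub Hs]] L HL.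
  destruct (S_exists n k eps psi s Hn Hk Hsum Heps Hlub Hs) as [Sg HSg].
  exists (Cadd L (Copp Sg)). split.
  { exact (integral_conv n k eps psi s L Hn Hk Hsum Heps Hlub Hs Sg HSg). }
  intros Mt.
  assert (HMt : Mt = Cmul xi (Cexp Sg)) by (apply Mt_eq; auto).
  assert (HK : (0 < K)%nat). { apply lcm_list_pos. intros i Hi. apply in_seq in Hi. apply Hk; lia. }
  split.
  { exists Sg. split; auto. }
  intros z. exists (Cmul (RtoC (INR K)) Sg). split.
  - apply (Cseries1_ext (fun j => Cmul (RtoC (INR K)) (Cdiv (Cmul (RtoC (cm n k (K * j))) (Cpow xi (K * j)))
        (RtoC (INR (K * j) * INR K ^ (K * j)))))).
    + intros j Hj. unfold z, K, xi. symmetry. apply b_eq; auto.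
    + apply (series_sub (fun m => Cdiv (Cmul (RtoC (cm n k m)) (Cpow xi m)) (RtoC (INR m * INR K ^ m))) K Sg HK); auto.
      intros m Hm. unfold cm. fold K. replace (Nat.eqb (m mod K) 0) with false.
      2:{ symmetry. apply Nat.eqb_neq. auto. }
      unfold Cdiv. generalize (Cpow xi m) (Cinv (RtoC (INR m * INR K ^ m))). intros; cring.
  - rewrite HMt. unfold z. rewrite !Cdiv_RtoC, Cpow_mul, Cexp_pow.
    generalize (Cpow xi K) (Cexp (Cmul (RtoC (INR K)) Sg)) (RtoC (/ INR K ^ K)). intros; cring.
Qed.
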